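(* Let $\mu$ be a doubling measure on $\mathbb{R}$ (with doubling constant $\delta$). Let $u,v\colon\mathbb{R}\to\mathbb{R}$ be such that $u'=\mu$ in the sense of distributions (i.e. $u(b)-u(a)=\mu([a,b])$ for $a<b$) and $v\in\Lambda_\mu$. Then the image of $\mathbb{R}$ under $\Gamma(t)=u(t)+iv(t)$ is a quasisymmetric graph. Moreover, for every $s>0$ there is $\varepsilon>0$ such that if $\delta\le\varepsilon$ and the $\Lambda_\mu$-seminorm of $v$ is at most $\varepsilon$, then $\Gamma(\mathbb{R})$ is an $s$-quasisymmetric graph.
   Context: A positive Radon measure $\mu$ on $\mathbb{R}$ is doubling if there is $\delta>0$ with $\mu(I)\le(1+\delta)\mu(J)$ for all adjacent intervals $I,J$ of equal length; such a measure is nonatomic. For a nonatomic positive Radon measure $\mu$ on $\mathbb{R}$, the generalized Zygmund class $\Lambda_\mu$ consists of continuous $g\colon\mathbb{R}\to\mathbb{R}$ for which there is $M>0$ with $|g(x+h)-2g(x)+g(x-h)|\le M\mu([x-h,x+h])$ for all $x\in\mathbb{R}$, $h\ge0$; the smallest such $M$ is the $\Lambda_\mu$-seminorm of $g$. An embedding $f$ is quasisymmetric if there is a homeomorphism $\eta\colon[0,\infty)\to[0,\infty)$ with $|f(x)-f(a)|\le\eta(|x-a|/|x-b|)\,|f(x)-f(b)|$ for all distinct $a,b,x$; it is $s$-quasisymmetric if $\eta$ can be chosen with $\eta(t)\le t+s$ for $0\le t\le1/s$. A set $\Gamma\subset\mathbb{C}$ is a quasisymmetric (resp. $s$-quasisymmetric)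 graph if the projection $w\mapsto\operatorname{Re} w$ is a quasisymmetric (resp. $s$-quasisymmetric) homeomorphism of $\Gamma$ onto $\mathbb{R}$. *)

(* Defs.v *)
From Stdlib Require Import Reals Lra.
Open Scope R_scope.

Inductive ereal : Type := EFin (r : R) | EInf.

Definition ele (x y : ereal) : Prop :=
  match x, y with
  | EFin a, EFin b => a <= b
  | _, EInf => True
  | EInf, EFin _ => False
  end.

Definition eadd (x y : ereal) : ereal :=
  match x, y with
  | EFin a, EFin b => EFin (a + b)
  | _, _ => EInf
  end.

Fixpoint epartial (f : nat -> ereal) (n : nat) : ereal :=
  match n with
  | O => f O
  | S k => eadd (epartial f k) (f (S k))
  end.

Definition is_esum (f : nat -> ereal) (l : ereal) : Prop :=
  (forall n, ele (epartial f n) l) /\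
  (forall m, (forall n, ele (epartial f n) m) -> ele l m).

Inductive borel : (R -> Prop) -> Prop :=
  | borel_open : forall A, open_set A -> borel A
  | borel_compl : forall A, borel A -> borel (fun x => ~ A x)
  | borel_union : forall A : nat -> R -> Prop,
      (forall n, borel (A n)) -> borel (fun x => exists n, A n x).

Definition Icc (a b : R) : R -> Prop := fun x => a <= x <= b.

Definition borel_measure (mu : (R -> Prop) -> ereal) : Prop :=
  (forall A B, (forall x, A x <-> B x) -> mu A = mu B) /\
  mu (fun _ => False) = EFin 0 /\
  (forall A r, borel A -> mu A = EFin r -> 0 <= r) /\
  (forall A : nat -> R -> Prop,
      (forall n, borel (A n)) ->
      (forall n m x, n <> m -> A n x -> A m x -> False) ->
      is_esum (fun n => mu (A n)) (mu (fun x => exists n, A n x))).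

(* Radon measure on R: Borel measure, finite on compact sets
   (equivalently on compact intervals, which contain every compact set). *)
Definition radon_measure (mu : (R -> Prop) -> ereal) : Prop :=
  borel_measure mu /\ (forall a b, exists r, mu (Icc a b) = EFin r).

Definition nonzero_measure (mu : (R -> Prop) -> ereal) : Prop :=
  exists A, borel A /\ mu A <> EFin 0.

Definition doubling (mu : (R -> Prop) -> ereal) (delta : R) : Prop :=
  forall x h r1 r2, 0 < h ->
    mu (Icc (x - h) x) = EFin r1 -> mu (Icc x (x + h)) = EFin r2 ->
    r1 <= (1 + delta) * r2 /\ r2 <= (1 + delta) * r1.

Definition zygmund_bound (mu : (R -> Prop) -> ereal) (g : R -> R) (M : R) : Prop :=
  forall x h r, 0 <= h -> mu (Icc (x - h) (x + h)) = EFin r ->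
    Rabs (g (x + h) - 2 * g x + g (x - h)) <= M * r.

Definition in_Lambda (mu : (R -> Prop) -> ereal) (g : R -> R) : Prop :=
  continuity g /\ exists M, 0 < M /\ zygmund_bound mu g M.

Definition is_inf (P : R -> Prop) (m : R) : Prop :=
  (forall x, P x -> m <= x) /\ (forall y, (forall x, P x -> y <= x) -> y <= m).

Definition Lambda_seminorm (mu : (R -> Prop) -> ereal) (g : R -> R) (N : R) : Prop :=
  is_inf (fun M => 0 < M /\ zygmund_bound mu g M) N.

(* C is modelled as R * R (real part, imaginary part) *)
Definition Cdist (p q : R * R) : R :=
  sqrt ((fst p - fst q) ^ 2 + (snd p - snd q) ^ 2).

Definition Rdist (x y : R) : R := Rabs (x - y).

Definition cont_on {X Y : Type} (dX : X -> X -> R) (dY : Y -> Y -> R)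
  (A : X -> Prop) (f : X -> Y) : Prop :=
  forall x, A x -> forall eps, 0 < eps -> exists d, 0 < d /\
    forall y, A y -> dX y x < d -> dY (f y) (f x) < eps.

Definition homeo_onto {X Y : Type} (dX : X -> X -> R) (dY : Y -> Y -> R)
  (A : X -> Prop) (B : Y -> Prop) (f : X -> Y) : Prop :=
  (forall x, A x -> B (f x)) /\
  (forall x y, A x -> A y -> f x = f y -> x = y) /\
  cont_on dX dY A f /\
  exists g : Y -> X,
    (forall y, B y -> A (g y) /\ f (g y) = y) /\ cont_on dY dX B g.

Definition nonnegR : R -> Prop := fun t => 0 <= t.

Definition homeo_halfline (eta : R -> R) : Prop :=
  homeo_onto Rdist Rdist nonnegR nonnegR eta.

Definition eta_qs {X Y : Type} (dX : X -> X -> R) (dY : Y -> Y -> R)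
  (A : X -> Prop) (f : X -> Y) (eta : R -> R) : Prop :=
  forall x a b, A x -> A a -> A b -> a <> b -> x <> a -> x <> b ->
    dY (f x) (f a) <= eta (dX x a / dX x b) * dY (f x) (f b).

Definition allR : R -> Prop := fun _ => True.

(* Gamma is a quasisymmetric graph: the projection w |-> Re w is a
   quasisymmetric homeomorphism of Gamma onto R *)
Definition qs_graph (Gamma : R * R -> Prop) : Prop :=
  homeo_onto Cdist Rdist Gamma allR fst /\
  exists eta, homeo_halfline eta /\ eta_qs Cdist Rdist Gamma fst eta.

Definition s_qs_graph (s : R) (Gamma : R * R -> Prop) : Prop :=
  homeo_onto Cdist Rdist Gamma allR fst /\
  exists eta, homeo_halfline eta /\
    (forall t, 0 <= t <= 1 / s -> eta t <= t + s) /\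
    eta_qs Cdist Rdist Gamma fst eta.

Definition graph_image (u v : R -> R) : R * R -> Prop :=
  fun w => exists t, w = (u t, v t).

(* Main.v *)
From Stdlib Require Import Reals Lra Lia.
From Stdlib Require Import IndefiniteDescription FunctionalExtensionality PropExtensionality Classical.
Require Import Defs.
Open Scope R_scope.

Definition econt (f : R -> R) (x : R) : Prop :=
  forall e, 0 < e -> exists d, 0 < d /\ forall y, Rabs (y - x) < d -> Rabs (f y - f x) < e.

Lemma cont_of_econt f : (forall x, econt f x) -> continuity f.
Proof.
  intros H x e He. destruct (H x e He) as [d [Hd Hy]].
  exists d; split; [lra|]. intros y [_ Hy2]. simpl in *. unfold R_dist in *. apply Hy; auto.
Qed.

Lemma econt_of_cont f x : continuity_pt f x -> econt f x.
Proof.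
  intros H e He. destruct (H e He) as [d [Hd Hy]].
  exists d; split; [lra|]. intros y Hyx.
  destruct (Req_dec y x) as [->|Hne].
  - rewrite Rminus_diag, Rabs_R0; lra.
  - apply (Hy y). split; [split; [exact I| auto]|]. simpl. unfold R_dist. auto.
Qed.

Lemma econt_all f : continuity f -> forall x, econt f x.
Proof. intros H x; apply econt_of_cont, H. Qed.

Lemma inverse_cont (f : R -> R) :
  continuity f -> (forall x y, x < y -> f x < f y) ->
  (forall y, exists a b, f a <= y <= f b) ->
  exists g : R -> R, (forall y, f (g y) = y) /\ (forall x, g (f x) = x) /\ (forall y, econt g y).
Proof.
  intros Hc Hm Hs.
  assert (Hex : forall y, exists x, f x = y).
  { intros y. destruct (Hs y) as [a [b [H1 H2]]].
    destruct (Rle_lt_dec a b) as [Hab|Hab].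
    - destruct (IVT_cor (fun t => f t - y) a b) as [z [_ Hz]].
      + intros t. apply continuity_pt_minus; [apply Hc| apply continuity_pt_const; intros ? ?; auto].
      + exact Hab.
      + assert (f a - y <= 0) by lra. assert (0 <= f b - y) by lra. nra.
      + exists z; lra.
    - assert (f b < f a) by (apply Hm; exact Hab). exists a; lra. }
  exists (fun y => proj1_sig (constructive_indefinite_description _ (Hex y))).
  assert (Hg : forall y, f (proj1_sig (constructive_indefinite_description _ (Hex y))) = y).
  { intros y. destruct (constructive_indefinite_description _ (Hex y)); auto. }
  assert (Hinj : forall x y, f x = f y -> x = y).
  { intros x y Hxy. destruct (Rtotal_order x y) as [H|[H|H]]; auto.
    - apply Hm in H; lra. - apply Hm in H; lra. }
  split; [exact Hg|]. split.
  { intros x. apply Hinj. rewrite Hg. auto. }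
  intros y e He. set (g := fun y => proj1_sig (constructive_indefinite_description _ (Hex y))).
  assert (Hg' : forall y, f (g y) = y) by exact Hg. clear Hg. rename Hg' into Hg.
  set (x0 := g y).
  assert (H1 : f (x0 - e) < y). { rewrite <- (Hg y) at 1. apply Hm. unfold x0. lra. }
  assert (H2 : y < f (x0 + e)). { rewrite <- (Hg y) at 1. apply Hm. unfold x0; lra. }
  exists (Rmin (f (x0 + e) - y) (y - f (x0 - e))). split.
  { apply Rmin_glb_lt; lra. }
  intros y' Hy'. apply Rabs_def2 in Hy' as Hy''. clear Hy'. destruct Hy'' as [Ha Hb].
  pose proof (Rmin_l (f (x0 + e) - y) (y - f (x0 - e))).
  pose proof (Rmin_r (f (x0 + e) - y) (y - f (x0 - e))).
  fold x0. apply Rabs_def1.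
  - destruct (Rlt_dec (g y' - x0) e) as [?|Hn]; auto. exfalso.
    assert (f (x0 + e) <= f (g y')).
    { destruct (Req_dec (x0 + e) (g y')) as [->|Hne]; [lra|]. left; apply Hm; lra. }
    rewrite Hg in H3. lra.
  - destruct (Rlt_dec (- e) (g y' - x0)) as [?|Hn]; auto. exfalso.
    assert (f (g y') <= f (x0 - e)).
    { destruct (Req_dec (x0 - e) (g y')) as [->|Hne]; [lra|]. left; apply Hm; lra. }
    rewrite Hg in H3. lra.
Qed.

Lemma homeo_of_inc (eta : R -> R) :
  continuity eta -> (forall x y, x < y -> eta x < eta y) -> eta 0 = 0 ->
  (forall y, exists a b, eta a <= y <= eta b) -> homeo_halfline eta.
Proof.
  intros Hc Hm H0 Hs.
  assert (Hle : forall x y, x <= y -> eta x <= eta y).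
  { intros x y [H|H]; [left; apply Hm; auto| subst; lra]. }
  destruct (inverse_cont eta Hc Hm Hs) as [g [Hg1 [Hg2 Hg3]]].
  unfold homeo_halfline, homeo_onto, nonnegR, cont_on, Rdist. split; [|split; [|split]].
  - intros x Hx. rewrite <- H0. apply Hle; auto.
  - intros x y _ _ Hxy. destruct (Rtotal_order x y) as [H|[H|H]]; auto.
    + apply Hm in H; lra. + apply Hm in H; lra.
  - intros x _ e He. destruct (econt_all eta Hc x e He) as [d [Hd Hy]].
    exists d; split; auto.
  - exists g. split.
    + intros y Hy. split; auto.
      destruct (Rlt_dec (g y) 0) as [Hl|Hl]; [|lra].
      apply Hm in Hl. rewrite Hg1, H0 in Hl. lra.
    + intros y _ e He. destruct (Hg3 y e He) as [d [Hd Hy]]. exists d; split; auto.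
Qed.

Lemma norm_tri p q e f :
  sqrt ((p + e) ^ 2 + (q + f) ^ 2) <= sqrt (p ^ 2 + q ^ 2) + Rabs e + Rabs f.
Proof.
  set (n := sqrt (p ^ 2 + q ^ 2)).
  assert (Hn0 : 0 <= n) by apply sqrt_pos.
  assert (Hn2 : n * n = p ^ 2 + q ^ 2).
  { unfold n. apply sqrt_sqrt. nra. }
  assert (Hp : Rabs p <= n).
  { unfold n. rewrite <- sqrt_Rsqr_abs. apply sqrt_le_1_alt. unfold Rsqr. nra. }
  assert (Hq : Rabs q <= n).
  { unfold n. rewrite <- sqrt_Rsqr_abs. apply sqrt_le_1_alt. unfold Rsqr. nra. }
  assert (Hpe : p * e <= n * Rabs e).
  { apply Rle_trans with (Rabs (p * e)); [apply Rle_abs|].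
    rewrite Rabs_mult. apply Rmult_le_compat_r; [apply Rabs_pos|auto]. }
  assert (Hqf : q * f <= n * Rabs f).
  { apply Rle_trans with (Rabs (q * f)); [apply Rle_abs|].
    rewrite Rabs_mult. apply Rmult_le_compat_r; [apply Rabs_pos|auto]. }
  assert (He2 : e ^ 2 = Rabs e * Rabs e).
  { rewrite <- Rabs_mult. simpl. rewrite Rmult_1_r. rewrite Rabs_right; [auto| apply Rle_ge; nra]. }
  assert (Hf2 : f ^ 2 = Rabs f * Rabs f).
  { rewrite <- Rabs_mult. simpl. rewrite Rmult_1_r. rewrite Rabs_right; [auto| apply Rle_ge; nra]. }
  pose proof (Rabs_pos e). pose proof (Rabs_pos f).
  rewrite <- (sqrt_Rsqr (n + Rabs e + Rabs f)) by lra.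
  apply sqrt_le_1_alt. unfold Rsqr. nra.
Qed.

Lemma norm_tri' p q e f :
  sqrt (p ^ 2 + q ^ 2) <= sqrt ((p + e) ^ 2 + (q + f) ^ 2) + Rabs e + Rabs f.
Proof.
  pose proof (norm_tri (p + e) (q + f) (- e) (- f)).
  rewrite !Rabs_Ropp in H.
  replace (p + e + - e) with p in H by ring. replace (q + f + - f) with q in H by ring. exact H.
Qed.

Lemma geo_to0 q : 0 <= q < 1 -> forall e, 0 < e -> exists N, forall n, (n >= N)%nat -> q ^ n < e.
Proof.
  intros Hq e He. destruct (pow_lt_1_zero q) with e as [N HN]; [rewrite Rabs_right; lra| auto|].
  exists N. intros n Hn. specialize (HN n Hn). rewrite Rabs_right in HN; auto.
  apply Rle_ge, pow_le; lra.
Qed.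

Lemma rec_to0 (b : nat -> R) q :
  0 <= q < 1 -> (forall n, 0 <= b n) -> (forall n, b (S n) <= q * b n + (/ 2) ^ (S n)) ->
  forall e, 0 < e -> exists N, forall n, (n >= N)%nat -> b n < e.
Proof.
  intros Hq Hb Hr e He.
  destruct (geo_to0 (/ 2)) with (e := e * (1 - q) / 2) as [N1 HN1]; [lra| apply Rmult_lt_0_compat; [apply Rmult_lt_0_compat|]; lra|].
  assert (Hk : forall k, b (N1 + k)%nat <= q ^ k * b N1 + e / 2).
  { induction k.
    - rewrite Nat.add_0_r. simpl. lra.
    - replace (N1 + S k)%nat with (S (N1 + k)) by lia.
      eapply Rle_trans; [apply Hr|].
      assert ((/ 2) ^ S (N1 + k) < e * (1 - q) / 2) by (apply HN1; lia).
      simpl in *. assert (0 <= q) by lra. nra. }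
  destruct (geo_to0 q Hq (e / 2 / (b N1 + 1))) as [k0 Hk0].
  { apply Rdiv_lt_0_compat; [lra|]. specialize (Hb N1); lra. }
  exists (N1 + k0)%nat. intros n Hn.
  replace n with (N1 + (n - N1))%nat by lia.
  eapply Rle_lt_trans; [apply Hk|].
  specialize (Hk0 (n - N1)%nat ltac:(lia)).
  assert (q ^ (n - N1) * b N1 < e / 2).
  { pose proof (Hb N1). pose proof (pow_le q (n - N1)).
    apply Rle_lt_trans with (q ^ (n - N1) * (b N1 + 1)); [nra|].
    apply Rmult_lt_reg_r with (/ (b N1 + 1)). { apply Rinv_0_lt_compat; lra. }
    rewrite Rmult_assoc, Rinv_r by lra. rewrite Rmult_1_r. unfold Rdiv in Hk0. lra. }
  lra.
Qed.

Lemma Rdiv_le_0_compat a b : 0 <= a -> 0 < b -> 0 <= a / b.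
Proof. intros. unfold Rdiv. apply Rmult_le_pos; auto. left; apply Rinv_0_lt_compat; auto. Qed.

Definition clamp01 (x : R) : R := Rmax 0 (Rmin 1 x).

Lemma clamp_bounds x : 0 <= clamp01 x <= 1.
Proof. unfold clamp01, Rmax, Rmin. repeat destruct Rle_dec; lra. Qed.

Lemma clamp_mono a b : a <= b -> clamp01 a <= clamp01 b.
Proof. unfold clamp01, Rmax, Rmin. repeat destruct Rle_dec; lra. Qed.

Lemma clamp_lip a b : a <= b -> clamp01 b - clamp01 a <= b - a.
Proof. unfold clamp01, Rmax, Rmin. repeat destruct Rle_dec; lra. Qed.

Lemma clamp_le0 a : a <= 0 -> clamp01 a = 0.
Proof. unfold clamp01, Rmax, Rmin. repeat destruct Rle_dec; lra. Qed.

Lemma clamp_ge1 a : 1 <= a -> clamp01 a = 1.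
Proof. unfold clamp01, Rmax, Rmin. repeat destruct Rle_dec; lra. Qed.

Definition wt (t r : R) : R := clamp01 (2 - r / t).

Lemma GL (S : R -> R -> Prop) :
  (forall R0 r, S R0 r -> 0 <= R0 /\ 0 < r) ->
  (forall e, 0 < e -> exists tau, 0 < tau /\ forall R0 r, S R0 r -> r <= tau -> R0 <= e) ->
  (forall T, exists K, forall R0 r, S R0 r -> r <= T -> R0 <= K) ->
  exists F : R -> R, continuity F /\ (forall x y, x <= y -> F x <= F y) /\
    (forall t, t <= 0 -> F t = 0) /\ (forall t, 0 <= F t) /\
    (forall R0 r, S R0 r -> R0 <= F r).
Proof.
  intros H0 H1 H2.
  set (E := fun t y => y = 0 \/ exists R0 r, S R0 r /\ y = R0 * wt t r).
  assert (Hub : forall t b, 0 < t -> 0 <= b ->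
            (forall R0 r, S R0 r -> r < 2 * t -> R0 * wt t r <= b) ->
            is_upper_bound (E t) b).
  { intros t b Ht Hb HH y [->|[R0 [r [HS ->]]]]; auto.
    destruct (Rlt_dec r (2 * t)) as [Hl|Hl]; auto.
    unfold wt. rewrite clamp_le0. { rewrite Rmult_0_r; auto. }
    apply Rnot_lt_le in Hl. assert (2 <= r / t).
    { apply Rmult_le_reg_r with t; auto. unfold Rdiv. rewrite Rmult_assoc, Rinv_l by lra. lra. }
    lra. }
  assert (Hbd : forall t, 0 < t -> exists K, 0 <= K /\ forall R0 r, S R0 r -> r < 2 * t -> R0 <= K).
  { intros t Ht. destruct (H2 (2 * t)) as [K HK]. exists (Rmax 0 K). split; [apply Rmax_l|].
    intros R0 r HS Hr. eapply Rle_trans; [apply (HK R0 r HS); lra| apply Rmax_r]. }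
  assert (Hwb : forall t r, 0 <= wt t r <= 1) by (intros; apply clamp_bounds).
  assert (Hex : forall t, exists m, (0 < t -> is_lub (E t) m) /\ (t <= 0 -> m = 0)).
  { intros t. destruct (Rlt_dec 0 t) as [Ht|Ht].
    - destruct (Hbd t Ht) as [K [HK0 HK]].
      destruct (completeness (E t)) as [m Hm].
      + exists K. apply Hub; auto. intros R0 r HS Hr. specialize (HK R0 r HS Hr).
        specialize (Hwb t r). destruct (H0 R0 r HS). nra.
      + exists 0; left; auto.
      + exists m; split; auto; intros; lra.
    - exists 0; split; intros; [lra| auto]. }
  set (F := fun t => proj1_sig (constructive_indefinite_description _ (Hex t))).
  assert (HF : forall t, (0 < t -> is_lub (E t) (F t)) /\ (t <= 0 -> F t = 0)).
  { intros t. unfold F. destruct (constructive_indefinite_description _ (Hex t)); auto. }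
  clearbody F.
  assert (HF0 : forall t, 0 <= F t).
  { intros t. destruct (Rlt_dec 0 t) as [Ht|Ht].
    - destruct (proj1 (HF t) Ht) as [Hu _]. apply Hu. left; auto.
    - rewrite (proj2 (HF t)); lra. }
  assert (HFle : forall t b, 0 < t -> 0 <= b ->
            (forall R0 r, S R0 r -> r < 2 * t -> R0 * wt t r <= b) -> F t <= b).
  { intros t b Ht Hb HH. destruct (proj1 (HF t) Ht) as [_ Hl]. apply Hl. apply Hub; auto. }
  assert (HFge : forall t R0 r, 0 < t -> S R0 r -> R0 * wt t r <= F t).
  { intros t R0 r Ht HS. destruct (proj1 (HF t) Ht) as [Hu _]. apply Hu. right; eauto. }
  assert (Hwmono : forall t t' r, 0 < t <= t' -> 0 <= r -> wt t r <= wt t' r).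
  { intros t t' r Ht Hr. unfold wt. apply clamp_mono.
    assert (r / t' <= r / t). { unfold Rdiv. apply Rmult_le_compat_l; auto. apply Rinv_le_contravar; lra. }
    lra. }
  assert (Hmono : forall x y, x <= y -> F x <= F y).
  { intros x y Hxy. destruct (Rlt_dec 0 x) as [Hx|Hx].
    - apply HFle; auto. intros R0 r HS _. eapply Rle_trans; [|apply (HFge y R0 r); auto; lra].
      destruct (H0 R0 r HS). apply Rmult_le_compat_l; auto. apply Hwmono; lra.
    - rewrite (proj2 (HF x)) by lra. auto. }
  assert (Hlip : forall t t' K, 0 < t <= t' -> 0 <= K ->
            (forall R0 r, S R0 r -> r < 2 * t' -> R0 <= K) ->
            F t' <= F t + K * (2 * (t' - t) / t)).
  { intros t t' K Ht HK0 HK. apply HFle; [lra| |].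
    { pose proof (HF0 t). assert (0 <= 2 * (t' - t) / t) by (apply Rdiv_le_0_compat; lra). nra. }
    intros R0 r HS Hr. destruct (H0 R0 r HS) as [HR Hr0].
    assert (Hw : wt t' r - wt t r <= 2 * (t' - t) / t).
    { unfold wt. eapply Rle_trans; [apply clamp_lip|].
      { assert (r / t' <= r / t). { unfold Rdiv. apply Rmult_le_compat_l; [lra|]. apply Rinv_le_contravar; lra. }
        lra. }
      replace (2 - r / t' - (2 - r / t)) with (r * (t' - t) / (t * t')) by (field; lra).
      unfold Rdiv. rewrite Rinv_mult.
      apply Rle_trans with (2 * t' * (t' - t) * / t * / t').
      - assert (0 <= (t' - t) * / t * / t').
        { apply Rmult_le_pos; [apply Rmult_le_pos|]; try lra; left; apply Rinv_0_lt_compat; lra. }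
        nra.
      - right. field. lra. }
    pose proof (HFge t R0 r (proj1 Ht) HS). specialize (HK R0 r HS Hr).
    assert (0 <= 2 * (t' - t) / t) by (apply Rdiv_le_0_compat; lra).
    nra. }
  exists F. split; [|split; [auto|split; [|split; auto]]].
  2: { intros t Ht. apply (proj2 (HF t) Ht). }
  2: { intros R0 r HS. destruct (H0 R0 r HS) as [HR Hr].
       pose proof (HFge r R0 r Hr HS). unfold wt in H.
       rewrite clamp_ge1 in H. { lra. } unfold Rdiv. rewrite Rinv_r; lra. }
  apply cont_of_econt. intros x e He.
  destruct (Rtotal_order x 0) as [Hx|[Hx|Hx]].
  - exists (- x). split; [lra|]. intros y Hy. apply Rabs_def2 in Hy.
    rewrite (proj2 (HF y)), (proj2 (HF x)) by lra. rewrite Rminus_diag, Rabs_R0; auto.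
  - subst x. destruct (H1 (e / 2)) as [tau [Htau Hta]]; [lra|].
    exists (tau / 2). split; [lra|]. intros y Hy. rewrite (proj2 (HF 0)) by lra.
    rewrite Rminus_0_r in *. destruct (Rle_dec y 0) as [Hy0|Hy0].
    + rewrite (proj2 (HF y)) by lra. rewrite Rabs_R0; auto.
    + rewrite Rabs_right by (apply Rle_ge; auto).
      apply Rle_lt_trans with (e / 2); [|lra]. apply HFle; [lra|lra|].
      intros R0 r HS Hr. rewrite Rabs_right in Hy by lra.
      pose proof (Hta R0 r HS ltac:(lra)). pose proof (Hwb y r). destruct (H0 R0 r HS). nra.
  - destruct (Hbd (3 * x / 2)) as [K [HK0 HK]]; [lra|].
    exists (Rmin (x / 2) (e * x / (4 * (K + 1)))). split.
    { apply Rmin_glb_lt; [lra|]. apply Rdiv_lt_0_compat; [nra|lra]. }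
    intros y Hy. pose proof (Rmin_l (x / 2) (e * x / (4 * (K + 1)))).
    pose proof (Rmin_r (x / 2) (e * x / (4 * (K + 1)))).
    set (d := Rmin (x / 2) (e * x / (4 * (K + 1)))) in *.
    apply Rabs_def2 in Hy. destruct Hy as [Hy1 Hy2].
    assert (Hkey : forall t t', x / 2 <= t <= t' -> t' <= 3 * x / 2 -> t' - t < d ->
                  F t' - F t < e).
    { intros t t' Ht Ht' Htt.
      assert (F t' <= F t + K * (2 * (t' - t) / t)).
      { apply Hlip; [lra|auto|]. intros R0 r HS Hr. apply (HK R0 r HS); lra. }
      apply Rle_lt_trans with (K * (2 * (t' - t) / t)); [lra|].
      assert (2 * (t' - t) / t <= 4 * (t' - t) / x).
      { unfold Rdiv. apply Rle_trans with (2 * (t' - t) * / (x / 2)).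
        - apply Rmult_le_compat_l; [lra|]. apply Rinv_le_contravar; lra.
        - right. field. lra. }
      assert (4 * (t' - t) / x < e / (K + 1)).
      { apply Rmult_lt_reg_r with x; [lra|]. unfold Rdiv.
        rewrite Rmult_assoc, Rinv_l, Rmult_1_r by lra.
        assert (t' - t < e * x / (4 * (K + 1))) by lra.
        assert (e * x / (4 * (K + 1)) * 4 = e * / (K + 1) * x) by (field; lra). nra. }
      assert (K * (e / (K + 1)) < e).
      { unfold Rdiv. rewrite <- Rmult_assoc. apply Rmult_lt_reg_r with (K + 1); [lra|].
        rewrite Rmult_assoc, Rinv_l, Rmult_1_r by lra. nra. }
      assert (0 <= 4 * (t' - t) / x) by (apply Rdiv_le_0_compat; lra).
      nra. }
    apply Rabs_def1.
    + destruct (Rle_dec x y).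
      * apply Hkey; lra.
      * pose proof (Hmono y x ltac:(lra)). lra.
    + destruct (Rle_dec y x).
      * pose proof (Hkey y x ltac:(lra) ltac:(lra) ltac:(lra)). lra.
      * pose proof (Hmono x y ltac:(lra)). lra.
Qed.

Lemma cont_ext f g : (forall x, f x = g x) -> continuity f -> continuity g.
Proof.
  intros Heq Hf. apply cont_of_econt. intros x e He.
  destruct (econt_all f Hf x e He) as [d [Hd H]]. exists d; split; auto.
  intros y Hy. rewrite <- !Heq. auto.
Qed.

Lemma cplus f g : continuity f -> continuity g -> continuity (fun t => f t + g t).
Proof. intros; exact (continuity_plus f g H H0). Qed.
Lemma cmult f g : continuity f -> continuity g -> continuity (fun t => f t * g t).
Proof. intros; exact (continuity_mult f g H H0). Qed.
Lemma cid : continuity (fun t => t).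
Proof. exact (derivable_continuous _ derivable_id). Qed.
Lemma ccst c : continuity (fun _ => c).
Proof. exact (derivable_continuous _ (derivable_const c)). Qed.
Lemma cinv f : continuity f -> (forall x, f x <> 0) -> continuity (fun t => / f t).
Proof. intros; exact (continuity_inv f H H0). Qed.
Lemma cabs f : continuity f -> continuity (fun t => Rabs (f t)).
Proof. intros; exact (continuity_comp f Rabs H Rcontinuity_abs). Qed.
Lemma copp f : continuity f -> continuity (fun t => - f t).
Proof. intros. apply cont_ext with (fun t => (-1) * f t); [intros; ring|]. apply cmult; auto. apply ccst. Qed.
Lemma cmin f g : continuity f -> continuity g -> continuity (fun t => Rmin (f t) (g t)).
Proof.
  intros. apply cont_ext with (fun t => / 2 * (f t + g t + - Rabs (f t + - g t))).
  { intros x. unfold Rmin. destruct Rle_dec; [rewrite Rabs_left1|rewrite Rabs_right]; lra. }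
  apply cmult; [apply ccst|]. apply cplus; [apply cplus; auto|]. apply copp, cabs, cplus; auto. apply copp; auto.
Qed.
Lemma cmax f g : continuity f -> continuity g -> continuity (fun t => Rmax (f t) (g t)).
Proof.
  intros. apply cont_ext with (fun t => / 2 * (f t + g t + Rabs (f t + - g t))).
  { intros x. unfold Rmax. destruct Rle_dec; [rewrite Rabs_left1|rewrite Rabs_right]; lra. }
  apply cmult; [apply ccst|]. apply cplus; [apply cplus; auto|]. apply cabs, cplus; auto. apply copp; auto.
Qed.

Lemma eta1_exists (S : R -> R -> Prop) :
  (forall R0 r, S R0 r -> 0 <= R0 /\ 0 < r) ->
  (forall e, 0 < e -> exists tau, 0 < tau /\ forall R0 r, S R0 r -> r <= tau -> R0 <= e) ->
  (forall T, exists K, forall R0 r, S R0 r -> r <= T -> R0 <= K) ->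
  exists eta, homeo_halfline eta /\ forall R0 r, S R0 r -> R0 <= eta r.
Proof.
  intros H0 H1 H2. destruct (GL S H0 H1 H2) as [F [Fc [Fm [F0 [Fp FS]]]]].
  exists (fun t => t + F t). split.
  - apply homeo_of_inc.
    + apply cplus; [apply cid|auto].
    + intros x y Hxy. pose proof (Fm x y ltac:(lra)). lra.
    + rewrite F0; lra.
    + intros y. exists (Rmin y 0), (Rmax y 0).
      rewrite (F0 (Rmin y 0)) by apply Rmin_r. pose proof (Fp (Rmax y 0)).
      pose proof (Rmin_l y 0). pose proof (Rmax_l y 0). lra.
  - intros R0 r HS. pose proof (FS R0 r HS). destruct (H0 R0 r HS). lra.
Qed.

Lemma tfrac_mono x y : x < y -> x / (1 + Rabs x) < y / (1 + Rabs y).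
Proof.
  intros Hxy. pose proof (Rabs_pos x). pose proof (Rabs_pos y).
  apply Rmult_lt_reg_r with ((1 + Rabs x) * (1 + Rabs y)); [nra|].
  replace (x / (1 + Rabs x) * ((1 + Rabs x) * (1 + Rabs y))) with (x * (1 + Rabs y)) by (field; lra).
  replace (y / (1 + Rabs y) * ((1 + Rabs x) * (1 + Rabs y))) with (y * (1 + Rabs x)) by (field; lra).
  destruct (Rle_dec 0 x); destruct (Rle_dec 0 y);
    [rewrite (Rabs_right x), (Rabs_right y)| rewrite (Rabs_right x), (Rabs_left y)
    | rewrite (Rabs_left x), (Rabs_right y) | rewrite (Rabs_left x), (Rabs_left y)]; nra.
Qed.

Lemma eta2_exists (S : R -> R -> Prop) (s : R) : 0 < s ->
  (forall R0 r, S R0 r -> 0 <= R0 /\ 0 < r) ->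
  (forall e, 0 < e -> exists tau, 0 < tau /\ forall R0 r, S R0 r -> r <= tau -> R0 <= e) ->
  (forall T, exists K, forall R0 r, S R0 r -> r <= T -> R0 <= K) ->
  (forall R0 r, S R0 r -> r <= 2 / s -> R0 <= r + s / 2) ->
  exists eta, homeo_halfline eta /\ (forall t, 0 <= t <= 1 / s -> eta t <= t + s) /\
    forall R0 r, S R0 r -> R0 <= eta r.
Proof.
  intros Hs H0 H1 H2 H3. destruct (GL S H0 H1 H2) as [F [Fc [Fm [F0 [Fp FS]]]]].
  set (G := fun t => t + s / 2 + F t * Rmax 0 (t * s - 1)).
  exists (fun t => Rmin (F t) (G t) + s / 2 * (t / (1 + Rabs t)) + Rmax 0 (t - 1 / s)).
  assert (Htf : forall t, 0 <= t -> 0 <= t / (1 + Rabs t) <= 1).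
  { intros t Ht. rewrite Rabs_right by lra. split.
    - apply Rdiv_le_0_compat; lra.
    - apply Rmult_le_reg_r with (1 + t); [lra|]. unfold Rdiv. rewrite Rmult_assoc, Rinv_l by lra. lra. }
  assert (HGm : forall x y, x <= y -> G x <= G y).
  { intros x y Hxy. unfold G. pose proof (Fm x y Hxy). pose proof (Fp x).
    assert (Rmax 0 (x * s - 1) <= Rmax 0 (y * s - 1)).
    { apply Rle_max_compat_l. nra. }
    pose proof (Rmax_l 0 (x * s - 1)). nra. }
  split; [|split].
  - apply homeo_of_inc.
    + apply cplus; [apply cplus|].
      * apply cmin; auto. unfold G. apply cplus; [apply cplus; [apply cid|apply ccst]|].
        apply cmult; auto. apply cmax; [apply ccst|]. apply cplus; [apply cmult; [apply cid|apply ccst]|apply ccst].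
      * apply cmult; [apply ccst|]. apply cmult; [apply cid|]. apply cinv.
        -- apply cplus; [apply ccst| apply cabs, cid].
        -- intros x. pose proof (Rabs_pos x). lra.
      * apply cmax; [apply ccst|]. apply cplus; [apply cid|apply ccst].
    + intros x y Hxy. pose proof (tfrac_mono x y Hxy).
      assert (Rmin (F x) (G x) <= Rmin (F y) (G y)).
      { pose proof (Fm x y ltac:(lra)). pose proof (HGm x y ltac:(lra)).
        unfold Rmin. repeat destruct Rle_dec; lra. }
      assert (Rmax 0 (x - 1 / s) <= Rmax 0 (y - 1 / s)) by (apply Rle_max_compat_l; lra).
      nra.
    + rewrite F0 by lra. unfold G. rewrite F0 by lra. rewrite Rabs_R0.
      unfold Rmin, Rmax. repeat destruct Rle_dec; try lra.
      assert (0 < 1 / s) by (apply Rdiv_lt_0_compat; lra). lra.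
    + intros y. destruct (Rle_dec 0 y) as [Hy|Hy].
      * exists 0, (y + 1 / s). split.
        -- rewrite F0 by lra. unfold G. rewrite F0 by lra. rewrite Rabs_R0.
           unfold Rmin, Rmax. repeat destruct Rle_dec; try lra.
           assert (0 < 1 / s) by (apply Rdiv_lt_0_compat; lra). lra.
        -- assert (0 < 1 / s) by (apply Rdiv_lt_0_compat; lra).
           pose proof (Htf (y + 1 / s) ltac:(lra)).
           assert (0 <= Rmin (F (y + 1 / s)) (G (y + 1 / s))).
           { apply Rmin_glb; auto. unfold G. pose proof (Fp (y + 1 / s)).
             pose proof (Rmax_l 0 ((y + 1 / s) * s - 1)). nra. }
           pose proof (Rmax_r 0 (y + 1 / s - 1 / s)). nra.
      * exists (y - s / 2), 0. split.
        -- assert (Hn : y - s / 2 < 0) by lra.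
           rewrite F0 by lra. unfold G. rewrite F0 by lra. rewrite Rmult_0_l, Rplus_0_r.
           rewrite Rabs_left by lra.
           assert (y - s / 2 - 1 / s < 0). { assert (0 < 1 / s) by (apply Rdiv_lt_0_compat; lra). lra. }
           rewrite Rmax_left by lra.
           assert (0 <= (y - s / 2) / (1 + - (y - s / 2)) + 1 - 1 \/ True) by auto.
           assert ((y - s / 2) / (1 + - (y - s / 2)) <= 0).
           { unfold Rdiv. assert (0 < / (1 + - (y - s / 2))) by (apply Rinv_0_lt_compat; lra). nra. }
           pose proof (Rmin_r 0 (y - s / 2 + s / 2)). nra.
        -- rewrite F0 by lra. unfold G. rewrite F0 by lra. rewrite Rabs_R0.
           unfold Rmin, Rmax. repeat destruct Rle_dec; try lra.
  - intros t [Ht1 Ht2]. pose proof (Htf t Ht1).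
    assert (Rmax 0 (t - 1 / s) = 0) by (apply Rmax_left; lra).
    assert (Rmin (F t) (G t) <= t + s / 2).
    { eapply Rle_trans; [apply Rmin_r|]. unfold G.
      assert (t * s <= 1).
      { apply Rmult_le_reg_r with (/ s). { apply Rinv_0_lt_compat; lra. }
        rewrite Rmult_assoc, Rinv_r, Rmult_1_r by lra. unfold Rdiv in Ht2. lra. }
      rewrite Rmax_left by lra. lra. }
    nra.
  - intros R0 r HS. destruct (H0 R0 r HS) as [HR Hr].
    pose proof (Htf r ltac:(lra)). pose proof (Rmax_l 0 (r - 1 / s)).
    assert (R0 <= Rmin (F r) (G r)).
    { apply Rmin_glb; [apply FS; auto|]. unfold G.
      destruct (Rle_dec r (2 / s)) as [Hl|Hl].
      - pose proof (H3 R0 r HS Hl). pose proof (Fp r). pose proof (Rmax_l 0 (r * s - 1)). nra.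
      - assert (1 <= r * s - 1).
        { apply Rnot_le_lt in Hl. assert (2 < r * s).
          { apply Rmult_lt_reg_r with (/ s). { apply Rinv_0_lt_compat; lra. }
            rewrite Rmult_assoc, Rinv_r, Rmult_1_r by lra. unfold Rdiv in Hl. lra. }
          lra. }
        pose proof (Rmax_r 0 (r * s - 1)). pose proof (FS R0 r HS). pose proof (Fp r). nra. }
    nra.
Qed.

Definition INC (u : R -> R) := forall x y, x < y -> u x < u y.
Definition DBL (u : R -> R) (d : R) := forall x h, 0 < h ->
  u x - u (x - h) <= (1 + d) * (u (x + h) - u x) /\ u (x + h) - u x <= (1 + d) * (u x - u (x - h)).
Definition ZYG (u w : R -> R) (K : R) := forall x h, 0 < h ->
  Rabs (w (x + h) - 2 * w x + w (x - h)) <= K * (u (x + h) - u (x - h)).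
Definition mu_ (u : R -> R) (x H : R) := Rabs (u (x + H) - u x).
Definition th (d : R) := (1 + d) / (2 + d).

Lemma INC_le u : INC u -> forall x y, x <= y -> u x <= u y.
Proof. intros Hu x y [H|H]; [left; apply Hu; auto| subst; lra]. Qed.

Lemma mu_pos u x H : INC u -> H <> 0 -> 0 < mu_ u x H.
Proof.
  intros Hu HH. unfold mu_. destruct (Rlt_dec 0 H).
  - pose proof (Hu x (x + H) ltac:(lra)). rewrite Rabs_right; lra.
  - pose proof (Hu (x + H) x ltac:(lra)). rewrite Rabs_left; lra.
Qed.

Lemma mu_nonneg u x H : 0 <= mu_ u x H.
Proof. apply Rabs_pos. Qed.

Lemma mu_pos_eq u x H : INC u -> 0 <= H -> mu_ u x H = u (x + H) - u x.
Proof. intros Hu HH. unfold mu_. rewrite Rabs_right; auto. apply Rle_ge.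
  pose proof (INC_le u Hu x (x + H) ltac:(lra)). lra. Qed.
Lemma mu_neg_eq u x H : INC u -> H <= 0 -> mu_ u x H = u x - u (x + H).
Proof. intros Hu HH. unfold mu_. rewrite Rabs_left1; [ring|].
  pose proof (INC_le u Hu (x + H) x ltac:(lra)). lra. Qed.

Lemma mu_mono u x H c c' : INC u -> 0 <= c <= c' -> mu_ u x (c * H) <= mu_ u x (c' * H).
Proof.
  intros Hu Hc. destruct (Rle_dec 0 H).
  - rewrite !mu_pos_eq by (auto; nra). pose proof (INC_le u Hu (x + c * H) (x + c' * H) ltac:(nra)). lra.
  - rewrite !mu_neg_eq by (auto; nra). pose proof (INC_le u Hu (x + c' * H) (x + c * H) ltac:(nra)). lra.
Qed.

Lemma th_bounds d : 0 < d -> 1 / 2 <= th d < 1.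
Proof. intros. unfold th. split.
  - apply Rmult_le_reg_r with (2 + d); [lra|]. replace ((1 + d) / (2 + d) * (2 + d)) with (1 + d) by (field; lra). lra.
  - apply Rmult_lt_reg_r with (2 + d); [lra|]. replace ((1 + d) / (2 + d) * (2 + d)) with (1 + d) by (field; lra). lra.
Qed.

Lemma half u d x H : INC u -> DBL u d -> 0 < d ->
  mu_ u x (H / 2) <= th d * mu_ u x H /\ mu_ u x H <= (2 + d) * mu_ u x (H / 2).
Proof.
  intros Hu Hd Hd0. destruct (Rtotal_order H 0) as [Hn|[Hz|Hp]].
  - destruct (Hd (x + H / 2) (- (H / 2)) ltac:(lra)) as [D1 D2].
    replace (x + H / 2 - - (H / 2)) with (x + H) in * by field.
    replace (x + H / 2 + - (H / 2)) with x in * by field.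
    rewrite !mu_neg_eq by (auto; lra).
    unfold th. split; [|lra].
    apply Rmult_le_reg_r with (2 + d); [lra|].
    replace ((1 + d) / (2 + d) * (u x - u (x + H)) * (2 + d)) with ((1 + d) * (u x - u (x + H))) by (field; lra).
    lra.
  - subst H. unfold mu_. replace (x + 0 / 2) with x by field. replace (x + 0) with x by ring.
    rewrite Rminus_diag, Rabs_R0. lra.
  - destruct (Hd (x + H / 2) (H / 2) ltac:(lra)) as [D1 D2].
    replace (x + H / 2 + H / 2) with (x + H) in * by field.
    replace (x + H / 2 - H / 2) with x in * by field.
    rewrite !mu_pos_eq by (auto; lra).
    unfold th. split; [|lra].
    apply Rmult_le_reg_r with (2 + d); [lra|].
    replace ((1 + d) / (2 + d) * (u (x + H) - u x) * (2 + d)) with ((1 + d) * (u (x + H) - u x)) by (field; lra).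
    lra.
Qed.

Lemma refl u d x H : INC u -> DBL u d -> mu_ u x (- H) <= (1 + d) * mu_ u x H.
Proof.
  intros Hu Hd. destruct (Rtotal_order H 0) as [Hn|[Hz|Hp]].
  - destruct (Hd x (- H) ltac:(lra)) as [D1 D2].
    rewrite mu_pos_eq, mu_neg_eq by (auto; lra). replace (x - - H) with (x + H) in * by field. lra.
  - subst. unfold mu_. rewrite Ropp_0, Rplus_0_r, Rminus_diag, Rabs_R0. lra.
  - destruct (Hd x H ltac:(lra)) as [D1 D2].
    rewrite (mu_neg_eq u x (- H)), (mu_pos_eq u x H) by (auto; lra). replace (x + - H) with (x - H) by ring. lra.
Qed.

Lemma iter u d x H n : INC u -> DBL u d -> 0 < d ->
  mu_ u x ((/ 2) ^ n * H) <= th d ^ n * mu_ u x H /\ mu_ u x H <= (2 + d) ^ n * mu_ u x ((/ 2) ^ n * H).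
Proof.
  intros Hu Hd Hd0. induction n.
  - simpl. rewrite Rmult_1_l. lra.
  - destruct IHn as [I1 I2].
    destruct (half u d x ((/ 2) ^ n * H) Hu Hd Hd0) as [J1 J2].
    replace ((/ 2) ^ n * H / 2) with ((/ 2) ^ S n * H) in * by (simpl; field).
    pose proof (th_bounds d Hd0). pose proof (mu_nonneg u x ((/ 2) ^ S n * H)).
    pose proof (mu_nonneg u x ((/ 2) ^ n * H)). pose proof (mu_nonneg u x H).
    change (th d ^ S n) with (th d * th d ^ n). change ((2 + d) ^ S n) with ((2 + d) * (2 + d) ^ n). split.
    + apply Rle_trans with (th d * mu_ u x ((/ 2) ^ n * H)); auto.
      rewrite Rmult_assoc. apply Rmult_le_compat_l; lra.
    + apply Rle_trans with ((2 + d) ^ n * mu_ u x ((/ 2) ^ n * H)); auto.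
      rewrite (Rmult_comm (2 + d)), Rmult_assoc. apply Rmult_le_compat_l; [apply pow_le; lra| lra].
Qed.

Lemma zyg_u u d : INC u -> DBL u d -> 0 < d -> ZYG u u d.
Proof.
  intros Hu Hd Hd0 x h Hh. destruct (Hd x h Hh) as [D1 D2].
  pose proof (Hu x (x + h) ltac:(lra)). pose proof (Hu (x - h) x ltac:(lra)).
  apply Rabs_le. split; nra.
Qed.

Lemma cont_aff w x H : continuity w -> continuity (fun l => w (x + l * H)).
Proof.
  intros Hw. apply (continuity_comp (fun l => x + l * H) w); auto.
  apply cplus; [apply ccst| apply cmult; [apply cid| apply ccst]].
Qed.

Lemma CL_up u w K x H lam : INC u -> ZYG u w K -> continuity w -> 0 <= K -> 0 <= lam <= 1 ->
  w (x + lam * H) - w x - lam * (w (x + H) - w x) <= K * mu_ u x H.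
Proof.
  intros Hu Hz Hw HK Hl.
  set (f := fun l => w (x + l * H) - w x - l * (w (x + H) - w x)).
  change (f lam <= K * mu_ u x H).
  assert (Hf : continuity f).
  { unfold f. apply cplus; [apply cplus; [apply cont_aff; auto| apply ccst]|].
    apply copp. apply cmult; [apply cid|apply ccst]. }
  pose proof (mu_nonneg u x H) as Hmu0.
  assert (HKm : 0 <= K * mu_ u x H) by (apply Rmult_le_pos; auto).
  destruct (Rle_dec (f lam) (K * mu_ u x H)) as [Hok|Hbad]; auto. exfalso.
  apply Rnot_le_lt in Hbad.
  destruct (continuity_ab_maj f 0 1 ltac:(lra) (fun c _ => Hf c)) as [l0 [Hmax Hl0]].
  assert (Hm : f lam <= f l0) by (apply Hmax; auto).
  assert (Hf0 : f 0 = 0). { unfold f. rewrite Rmult_0_l, Rplus_0_r. ring. }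
  assert (Hf1 : f 1 = 0). { unfold f. rewrite Rmult_1_l. ring. }
  assert (HH : H <> 0).
  { intros ->. unfold mu_ in Hbad. rewrite Rplus_0_r, Rminus_diag, Rabs_R0, Rmult_0_r in Hbad.
    unfold f in Hbad. rewrite Rmult_0_r, Rplus_0_r in Hbad. lra. }
  assert (Hl0' : 0 < l0 < 1).
  { assert (l0 <> 0). { intros E. rewrite E, Hf0 in Hm. lra. }
    assert (l0 <> 1). { intros E. rewrite E, Hf1 in Hm. lra. }
    destruct Hl0 as [[A1|A1] [A2|A2]]; try lra; subst; tauto. }
  set (h := Rmin l0 (1 - l0)).
  assert (Hh : 0 < h) by (apply Rmin_glb_lt; lra).
  assert (Hh1 : h <= l0) by apply Rmin_l. assert (Hh2 : h <= 1 - l0) by apply Rmin_r.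
  assert (Hend : f (l0 + h) + f (l0 - h) <= f l0).
  { unfold h, Rmin in *. destruct Rle_dec as [C|C].
    - replace (l0 - l0) with 0 by ring. rewrite Hf0. rewrite Rplus_0_r. apply Hmax; lra.
    - replace (l0 + (1 - l0)) with 1 by ring. rewrite Hf1. rewrite Rplus_0_l. apply Hmax; lra. }
  assert (HE : f (l0 + h) + f (l0 - h) - 2 * f l0 =
               w (x + l0 * H + h * Rabs H) - 2 * w (x + l0 * H) + w (x + l0 * H - h * Rabs H)).
  { unfold f. destruct (Rle_dec 0 H).
    - rewrite Rabs_right by lra.
      replace (x + (l0 + h) * H) with (x + l0 * H + h * H) by ring.
      replace (x + (l0 - h) * H) with (x + l0 * H - h * H) by ring. ring.
    - rewrite Rabs_left by lra.
      replace (x + (l0 + h) * H) with (x + l0 * H - h * - H) by ring.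
      replace (x + (l0 - h) * H) with (x + l0 * H + h * - H) by ring. ring. }
  assert (HAbs : 0 < Rabs H) by (apply Rabs_pos_lt; auto).
  pose proof (Hz (x + l0 * H) (h * Rabs H) ltac:(nra)) as Z.
  rewrite <- HE in Z.
  assert (Hin : u (x + l0 * H + h * Rabs H) - u (x + l0 * H - h * Rabs H) <= mu_ u x H).
  { destruct (Rle_dec 0 H).
    - rewrite Rabs_right in * by lra. rewrite mu_pos_eq by (auto; lra).
      pose proof (INC_le u Hu (x + l0 * H + h * H) (x + H) ltac:(nra)).
      pose proof (INC_le u Hu x (x + l0 * H - h * H) ltac:(nra)). lra.
    - rewrite Rabs_left in * by lra. rewrite mu_neg_eq by (auto; lra).
      pose proof (INC_le u Hu (x + l0 * H + h * - H) x ltac:(nra)).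
      pose proof (INC_le u Hu (x + H) (x + l0 * H - h * - H) ltac:(nra)). lra. }
  assert (Hz2 : - (f (l0 + h) + f (l0 - h) - 2 * f l0) <= K * mu_ u x H).
  { eapply Rle_trans; [|apply Rmult_le_compat_l; [exact HK| exact Hin]].
    eapply Rle_trans; [|exact Z]. rewrite <- Rabs_Ropp. apply Rle_abs. }
  lra.
Qed.

Lemma ZYG_opp u w K : ZYG u w K -> ZYG u (fun t => - w t) K.
Proof. intros Hz x h Hh. replace (- w (x + h) - 2 * - w x + - w (x - h)) with (- (w (x + h) - 2 * w x + w (x - h))) by ring.
  rewrite Rabs_Ropp. auto. Qed.

Lemma CL u w K x H lam : INC u -> ZYG u w K -> continuity w -> 0 <= K -> 0 <= lam <= 1 ->
  Rabs (w (x + lam * H) - w x - lam * (w (x + H) - w x)) <= K * mu_ u x H.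
Proof.
  intros. apply Rabs_le. split.
  - pose proof (CL_up u (fun t => - w t) K x H lam H0 (ZYG_opp u w K H1) (copp w H2) H3 H4). simpl in H5. lra.
  - apply CL_up; auto.
Qed.

Lemma Zmid u w K x H : INC u -> ZYG u w K -> 0 <= K ->
  Rabs (w (x + H) - 2 * w (x + H / 2) + w x) <= K * mu_ u x H.
Proof.
  intros Hu Hz HK. destruct (Rtotal_order H 0) as [Hn|[Hz0|Hp]].
  - pose proof (Hz (x + H / 2) (- (H / 2)) ltac:(lra)).
    replace (x + H / 2 + - (H / 2)) with x in H0 by field.
    replace (x + H / 2 - - (H / 2)) with (x + H) in H0 by field.
    rewrite mu_neg_eq by (auto; lra).
    replace (w (x + H) - 2 * w (x + H / 2) + w x) with (w x - 2 * w (x + H / 2) + w (x + H)) by ring. auto.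
  - subst. replace (x + 0 / 2) with x by field. rewrite Rplus_0_r.
    replace (w x - 2 * w x + w x) with 0 by ring. rewrite Rabs_R0. pose proof (mu_nonneg u x 0). nra.
  - pose proof (Hz (x + H / 2) (H / 2) ltac:(lra)).
    replace (x + H / 2 + H / 2) with (x + H) in H0 by field.
    replace (x + H / 2 - H / 2) with x in H0 by field.
    rewrite mu_pos_eq by (auto; lra). auto.
Qed.

Fixpoint bseq (t : R) (n : nat) : R :=
  match n with O => 1 | S m => t * bseq t m + (/ 2) ^ (S m) end.

Lemma bseq_nonneg t n : 0 <= t -> 0 <= bseq t n.
Proof. intros Ht. induction n; simpl; [lra|]. pose proof (pow_le (/2) n). assert (0 <= /2) by lra. nra. Qed.

Lemma bseq_mono t t' n : 0 <= t <= t' -> bseq t n <= bseq t' n.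
Proof. intros Ht. induction n; simpl; [lra|]. pose proof (bseq_nonneg t n (proj1 Ht)). nra. Qed.

Lemma REL u w K d n : INC u -> DBL u d -> 0 < d -> ZYG u w K -> continuity w -> 0 <= K ->
  forall x H lam, 0 <= lam <= (/ 2) ^ n ->
  Rabs (w (x + lam * H) - w x - lam * (w (x + H) - w x)) <= bseq (th d) n * K * mu_ u x H.
Proof.
  intros Hu Hd Hd0 Hz Hw HK. induction n; intros x H lam Hl.
  - simpl in *. rewrite Rmult_1_l. apply CL; auto.
  - assert (Hl' : 0 <= 2 * lam <= (/ 2) ^ n).
    { simpl in Hl. lra. }
    specialize (IHn x (H / 2) (2 * lam) Hl').
    replace (x + 2 * lam * (H / 2)) with (x + lam * H) in IHn by field.
    destruct (half u d x H Hu Hd Hd0) as [Hh _].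
    pose proof (Zmid u w K x H Hu Hz HK) as Zm.
    pose proof (th_bounds d Hd0). pose proof (bseq_nonneg (th d) n ltac:(lra)).
    pose proof (mu_nonneg u x H). pose proof (mu_nonneg u x (H / 2)).
    assert (E : w (x + lam * H) - w x - lam * (w (x + H) - w x) =
                (w (x + lam * H) - w x - 2 * lam * (w (x + H / 2) - w x))
                - lam * (w (x + H) - 2 * w (x + H / 2) + w x)) by ring.
    rewrite E. eapply Rle_trans; [apply Rabs_triang|]. rewrite Rabs_Ropp, Rabs_mult.
    rewrite (Rabs_right lam) by lra.
    assert (lam * Rabs (w (x + H) - 2 * w (x + H / 2) + w x) <= (/ 2) ^ S n * (K * mu_ u x H)).
    { apply Rmult_le_compat; auto; [lra|apply Rabs_pos|lra]. }
    assert (bseq (th d) n * K * mu_ u x (H / 2) <= bseq (th d) n * K * (th d * mu_ u x H)).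
    { apply Rmult_le_compat_l; auto. apply Rmult_le_pos; auto. }
    simpl bseq. simpl pow in *. nra.
Qed.

Lemma sides Ha Hb : Ha <> 0 ->
  Hb = (Rabs Hb / Rabs Ha) * Ha \/ Hb = - ((Rabs Hb / Rabs Ha) * Ha).
Proof.
  intros H. destruct (Rle_dec 0 Ha); destruct (Rle_dec 0 Hb);
  [rewrite (Rabs_right Ha), (Rabs_right Hb) | rewrite (Rabs_right Ha), (Rabs_left Hb)
  | rewrite (Rabs_left Ha), (Rabs_right Hb) | rewrite (Rabs_left Ha), (Rabs_left Hb)];
  try lra; [left|right|right|left]; field; lra.
Qed.

Lemma lam_bounds Ha Hb c : Ha <> 0 -> Rabs Hb <= c * Rabs Ha -> 0 <= Rabs Hb / Rabs Ha <= c.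
Proof.
  intros H Hc. pose proof (Rabs_pos_lt Ha H). split.
  - apply Rdiv_le_0_compat; [apply Rabs_pos|auto].
  - apply Rmult_le_reg_r with (Rabs Ha); auto. replace (Rabs Hb / Rabs Ha * Rabs Ha) with (Rabs Hb) by (field; lra). lra.
Qed.

Lemma lam_lower Ha Hb c : Ha <> 0 -> c * Rabs Ha <= Rabs Hb -> c <= Rabs Hb / Rabs Ha.
Proof.
  intros H Hc. pose proof (Rabs_pos_lt Ha H).
  apply Rmult_le_reg_r with (Rabs Ha); auto. replace (Rabs Hb / Rabs Ha * Rabs Ha) with (Rabs Hb) by (field; lra). lra.
Qed.

Lemma mu_mono' u x H c c' : INC u -> 0 <= c <= c' -> mu_ u x (- (c * H)) <= mu_ u x (- (c' * H)).
Proof. intros. replace (- (c * H)) with (c * - H) by ring. replace (- (c' * H)) with (c' * - H) by ring. apply mu_mono; auto. Qed.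

Lemma UB u d x Ha Hb n : INC u -> DBL u d -> 0 < d -> Ha <> 0 ->
  Rabs Hb <= (/ 2) ^ n * Rabs Ha -> mu_ u x Hb <= (1 + d) * th d ^ n * mu_ u x Ha.
Proof.
  intros Hu Hd Hd0 HA Hl. pose proof (lam_bounds Ha Hb _ HA Hl) as Hlam.
  set (lam := Rabs Hb / Rabs Ha) in *.
  pose proof (mu_mono u x Ha lam ((/ 2) ^ n) Hu Hlam).
  destruct (iter u d x Ha n Hu Hd Hd0) as [I1 _].
  pose proof (mu_nonneg u x (lam * Ha)).
  assert (Hb2 : mu_ u x Hb <= (1 + d) * mu_ u x (lam * Ha)).
  { destruct (sides Ha Hb HA) as [E|E]; fold lam in E; rewrite E.
    - nra.
    - apply refl; auto. }
  nra.
Qed.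

Lemma LOWB u d x Ha Hb n : INC u -> DBL u d -> 0 < d -> Ha <> 0 ->
  (/ 2) ^ n * Rabs Ha <= Rabs Hb -> mu_ u x Ha <= (1 + d) * (2 + d) ^ n * mu_ u x Hb.
Proof.
  intros Hu Hd Hd0 HA Hl. pose proof (lam_lower Ha Hb _ HA Hl) as Hlam.
  set (lam := Rabs Hb / Rabs Ha) in *.
  assert (Hp : 0 <= (/ 2) ^ n) by (apply pow_le; lra).
  pose proof (mu_mono u x Ha ((/ 2) ^ n) lam Hu ltac:(lra)).
  destruct (iter u d x Ha n Hu Hd Hd0) as [_ I2].
  assert (Hb2 : mu_ u x (lam * Ha) <= (1 + d) * mu_ u x Hb).
  { destruct (sides Ha Hb HA) as [E|E]; fold lam in E; rewrite E.
    - pose proof (mu_nonneg u x (lam * Ha)). nra.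
    - pose proof (refl u d x (- (lam * Ha)) Hu Hd). rewrite Ropp_involutive in H0. auto. }
  assert (0 <= (2 + d) ^ n) by (apply pow_le; lra).
  apply Rle_trans with ((2 + d) ^ n * mu_ u x ((/ 2) ^ n * Ha)); auto.
  apply Rle_trans with ((2 + d) ^ n * mu_ u x (lam * Ha)). { apply Rmult_le_compat_l; auto. }
  replace ((1 + d) * (2 + d) ^ n * mu_ u x Hb) with ((2 + d) ^ n * ((1 + d) * mu_ u x Hb)) by ring.
  apply Rmult_le_compat_l; auto.
Qed.

Lemma two_sided u x h : INC u -> 0 < h -> u (x + h) - u (x - h) = mu_ u x h + mu_ u x (- h).
Proof. intros Hu Hh. rewrite mu_pos_eq, mu_neg_eq by (auto; lra). replace (x + - h) with (x - h) by ring. ring. Qed.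

Definition cseq d n := bseq (th d) n + (2 + d) * th d ^ n.

Lemma VB u v d M x Ha Hb n : INC u -> DBL u d -> 0 < d -> ZYG u v M -> continuity v -> 0 <= M ->
  Ha <> 0 -> Rabs Hb <= (/ 2) ^ n * Rabs Ha ->
  Rabs (v (x + Hb) - v x) <= Rabs Hb / Rabs Ha * Rabs (v (x + Ha) - v x) + cseq d n * M * mu_ u x Ha /\
  Rabs Hb / Rabs Ha * Rabs (v (x + Ha) - v x) <= Rabs (v (x + Hb) - v x) + cseq d n * M * mu_ u x Ha.
Proof.
  intros Hu Hd Hd0 Hz Hv HM HA Hl. pose proof (lam_bounds Ha Hb _ HA Hl) as Hlam.
  set (lam := Rabs Hb / Rabs Ha) in *.
  pose proof (REL u v M d n Hu Hd Hd0 Hz Hv HM x Ha lam Hlam) as Rl.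
  pose proof (th_bounds d Hd0).
  pose proof (mu_mono u x Ha lam ((/ 2) ^ n) Hu Hlam).
  destruct (iter u d x Ha n Hu Hd Hd0) as [I1 _].
  pose proof (mu_nonneg u x (lam * Ha)). pose proof (mu_nonneg u x Ha).
  pose proof (bseq_nonneg (th d) n ltac:(lra)).
  assert (Hpw : 0 <= th d ^ n) by (apply pow_le; lra).
  set (Da := v (x + Ha) - v x) in *.
  assert (Key : exists sg, (sg = 1 \/ sg = -1) /\
             Rabs (v (x + Hb) - v x - sg * lam * Da) <= cseq d n * M * mu_ u x Ha).
  { destruct (sides Ha Hb HA) as [E|E]; fold lam in E.
    - exists 1. split; auto. rewrite E, Rmult_1_l. eapply Rle_trans; [exact Rl|].
      unfold cseq. assert (0 <= (2 + d) * th d ^ n * M * mu_ u x Ha).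
      { repeat apply Rmult_le_pos; auto; lra. }
      nra.
    - exists (-1). split; auto.
      destruct (Req_dec lam 0) as [Hl0|Hl0].
      { assert (Hb0 : Hb = 0) by (rewrite E, Hl0; ring). rewrite Hb0, Hl0, Rplus_0_r.
        replace (v x - v x - -1 * 0 * Da) with 0 by ring. rewrite Rabs_R0.
        unfold cseq. assert (0 <= (2 + d) * th d ^ n * M * mu_ u x Ha).
        { repeat apply Rmult_le_pos; auto; lra. }
        assert (0 <= bseq (th d) n * M * mu_ u x Ha) by (repeat apply Rmult_le_pos; auto). lra. }
      assert (Hh : 0 < Rabs (lam * Ha)) by (apply Rabs_pos_lt; intro Hq; apply Rmult_integral in Hq; tauto).
      pose proof (Hz x (Rabs (lam * Ha)) Hh) as Z.
      assert (Zs : Rabs (v (x + lam * Ha) - 2 * v x + v (x - lam * Ha)) <= M * (mu_ u x (lam * Ha) + mu_ u x (- (lam * Ha)))).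
      { destruct (Rle_dec 0 (lam * Ha)).
        - rewrite (Rabs_right (lam * Ha)) in Z, Hh by lra. rewrite two_sided in Z by (auto; lra). auto.
        - rewrite (Rabs_left (lam * Ha)) in Z, Hh by lra. rewrite two_sided in Z by (auto; lra).
          rewrite Ropp_involutive in Z.
          replace (x + - (lam * Ha)) with (x - lam * Ha) in Z by ring.
          replace (x - - (lam * Ha)) with (x + lam * Ha) in Z by ring.
          replace (v (x + lam * Ha) - 2 * v x + v (x - lam * Ha)) with (v (x - lam * Ha) - 2 * v x + v (x + lam * Ha)) by ring.
          lra. }
      pose proof (refl u d x (lam * Ha) Hu Hd).
      rewrite E. replace (x + - (lam * Ha)) with (x - lam * Ha) by ring.
      replace (v (x - lam * Ha) - v x - -1 * lam * Da) with
        ((v (x + lam * Ha) - 2 * v x + v (x - lam * Ha)) - (v (x + lam * Ha) - v x - lam * Da)) by ring.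
      eapply Rle_trans; [apply Rabs_triang|]. rewrite Rabs_Ropp.
      assert (M * (mu_ u x (lam * Ha) + mu_ u x (- (lam * Ha))) <= (2 + d) * th d ^ n * M * mu_ u x Ha).
      { apply Rle_trans with (M * ((2 + d) * mu_ u x (lam * Ha))). { apply Rmult_le_compat_l; lra. }
        assert (mu_ u x (lam * Ha) <= th d ^ n * mu_ u x Ha) by lra. replace ((2 + d) * th d ^ n * M * mu_ u x Ha) with (M * ((2 + d) * (th d ^ n * mu_ u x Ha))) by ring. apply Rmult_le_compat_l; [lra|]. apply Rmult_le_compat_l; lra. }
      unfold cseq. lra. }
  destruct Key as [sg [Hsg Hk]].
  assert (Rabs (sg * lam * Da) = lam * Rabs Da).
  { rewrite !Rabs_mult. rewrite (Rabs_right lam) by lra. destruct Hsg as [->| ->]; [rewrite Rabs_R1| rewrite (Rabs_left (-1)) by lra]; ring. }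
  pose proof (Rabs_triang (v (x + Hb) - v x - sg * lam * Da) (sg * lam * Da)) as T1.
  replace (v (x + Hb) - v x - sg * lam * Da + sg * lam * Da) with (v (x + Hb) - v x) in T1 by ring.
  pose proof (Rabs_triang (v (x + Hb) - v x) (- (v (x + Hb) - v x - sg * lam * Da))) as T2.
  replace (v (x + Hb) - v x + - (v (x + Hb) - v x - sg * lam * Da)) with (sg * lam * Da) in T2 by ring.
  rewrite Rabs_Ropp in T2.
  split; lra.
Qed.

Definition Pd (u v : R -> R) x H := sqrt ((u x - u (x + H)) ^ 2 + (v x - v (x + H)) ^ 2).

Lemma Pd_ge_A u v x H : mu_ u x H <= Pd u v x H.
Proof.
  unfold Pd, mu_. rewrite <- Rabs_Ropp. replace (- (u (x + H) - u x)) with (u x - u (x + H)) by ring.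
  rewrite <- sqrt_Rsqr_abs. apply sqrt_le_1_alt. pose proof (Rle_0_sqr (v x - v (x + H))). unfold Rsqr in *. simpl. lra.
Qed.

Lemma Pd_ge_D u v x H : Rabs (v (x + H) - v x) <= Pd u v x H.
Proof.
  unfold Pd. rewrite <- Rabs_Ropp. replace (- (v (x + H) - v x)) with (v x - v (x + H)) by ring.
  rewrite <- sqrt_Rsqr_abs. apply sqrt_le_1_alt. pose proof (Rle_0_sqr (u x - u (x + H))). unfold Rsqr in *. simpl. lra.
Qed.

Lemma Pd_le u v x H : Pd u v x H <= mu_ u x H + Rabs (v (x + H) - v x).
Proof.
  unfold Pd. pose proof (norm_tri 0 0 (u x - u (x + H)) (v x - v (x + H))).
  rewrite !Rplus_0_l in H0. replace (0 ^ 2 + 0 ^ 2) with 0 in H0 by ring. rewrite sqrt_0 in H0.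
  unfold mu_. rewrite (Rabs_minus_sym (u (x + H))), (Rabs_minus_sym (v (x + H))). lra.
Qed.

Lemma div_ge (P Q C : R) : 0 < P -> 0 < Q -> Q <= C * P -> 1 / C <= P / Q.
Proof.
  intros HP HQ HC. assert (0 < C) by nra.
  apply Rmult_le_reg_r with (C * Q); [nra|].
  replace (1 / C * (C * Q)) with Q by (field; lra).
  replace (P / Q * (C * Q)) with (C * P) by (field; lra). lra.
Qed.

Definition gseq d M n := (1 + d) * th d ^ n + cseq d n * M + (/ 2) ^ n.

Lemma FARQ u v d M x Ha Hb n : INC u -> DBL u d -> 0 < d -> ZYG u v M -> continuity v -> 0 <= M ->
  Ha <> 0 -> Rabs Hb <= (/ 2) ^ n * Rabs Ha -> Pd u v x Hb <= 2 * gseq d M n * Pd u v x Ha.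
Proof.
  intros Hu Hd Hd0 Hz Hv HM HA Hl.
  pose proof (UB u d x Ha Hb n Hu Hd Hd0 HA Hl) as U1.
  destruct (VB u v d M x Ha Hb n Hu Hd Hd0 Hz Hv HM HA Hl) as [V1 _].
  pose proof (lam_bounds Ha Hb _ HA Hl) as Hlam.
  pose proof (Pd_le u v x Hb). pose proof (Pd_ge_A u v x Ha). pose proof (Pd_ge_D u v x Ha).
  pose proof (mu_nonneg u x Ha). pose proof (Rabs_pos (v (x + Ha) - v x)).
  pose proof (th_bounds d Hd0). assert (0 <= th d ^ n) by (apply pow_le; lra).
  assert (0 <= cseq d n).
  { unfold cseq. pose proof (bseq_nonneg (th d) n ltac:(lra)). assert (0 <= (2 + d) * th d ^ n) by nra. lra. }
  assert (0 <= (/ 2) ^ n) by (apply pow_le; lra).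
  assert (Rabs Hb / Rabs Ha * Rabs (v (x + Ha) - v x) <= (/ 2) ^ n * Rabs (v (x + Ha) - v x)).
  { apply Rmult_le_compat_r; lra. }
  unfold gseq.
  assert (Pd u v x Hb <= ((1 + d) * th d ^ n + cseq d n * M) * mu_ u x Ha + (/ 2) ^ n * Rabs (v (x + Ha) - v x)) by lra.
  assert (0 <= (1 + d) * th d ^ n + cseq d n * M) by nra.
  assert (((1 + d) * th d ^ n + cseq d n * M) * mu_ u x Ha <= ((1 + d) * th d ^ n + cseq d n * M) * Pd u v x Ha).
  { apply Rmult_le_compat_l; auto. }
  assert ((/ 2) ^ n * Rabs (v (x + Ha) - v x) <= (/ 2) ^ n * Pd u v x Ha).
  { apply Rmult_le_compat_l; auto. }
  nra.
Qed.

Definition Srel (u v : R -> R) (R0 r : R) := exists x Ha Hb, Ha <> 0 /\ Hb <> 0 /\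
  R0 = mu_ u x Ha / mu_ u x Hb /\ r = Pd u v x Ha / Pd u v x Hb.

Lemma Pd_pos u v x H : INC u -> H <> 0 -> 0 < Pd u v x H.
Proof. intros. pose proof (mu_pos u x H H0 H1). pose proof (Pd_ge_A u v x H). lra. Qed.

Lemma S0 u v R0 r : INC u -> Srel u v R0 r -> 0 <= R0 /\ 0 < r.
Proof.
  intros Hu [x [Ha [Hb [HA [HB [-> ->]]]]]].
  pose proof (mu_pos u x Ha Hu HA). pose proof (mu_pos u x Hb Hu HB).
  pose proof (Pd_pos u v x Ha Hu HA). pose proof (Pd_pos u v x Hb Hu HB).
  split; [left|]; apply Rdiv_lt_0_compat; auto.
Qed.

Lemma ev_and (P1 P2 : nat -> Prop) :
  (exists N, forall n, (n >= N)%nat -> P1 n) -> (exists N, forall n, (n >= N)%nat -> P2 n) ->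
  exists N, forall n, (n >= N)%nat -> P1 n /\ P2 n.
Proof. intros [N1 H1] [N2 H2]. exists (max N1 N2). intros n Hn. split; [apply H1|apply H2]; lia. Qed.

Lemma gseq_to0 d M : 0 < d -> 0 <= M -> forall e, 0 < e -> exists N, gseq d M N < e.
Proof.
  intros Hd HM e He. pose proof (th_bounds d Hd).
  assert (Hbn : forall n, 0 <= bseq (th d) n) by (intros; apply bseq_nonneg; lra).
  destruct (ev_and _ _ (geo_to0 (th d) ltac:(lra) (e / (6 * (1 + d) * (2 + d) * (M + 1))) ltac:(apply Rdiv_lt_0_compat; [lra| repeat apply Rmult_lt_0_compat; lra]))
     (ev_and _ _ (rec_to0 (bseq (th d)) (th d) ltac:(lra) Hbn (fun n => Rle_refl _)
                   (e / (6 * (M + 1))) ltac:(apply Rdiv_lt_0_compat; lra))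
                 (geo_to0 (/ 2) ltac:(lra) (e / 3) ltac:(lra)))) as [N HN].
  destruct (HN N (le_n N)) as [T1 [T2 T3]]. exists N. unfold gseq, cseq.
  assert (Hp : 0 <= th d ^ N) by (apply pow_le; lra).
  set (t := th d ^ N) in *. set (b := bseq (th d) N) in *.
  assert (Ht : t * (6 * (1 + d) * (2 + d) * (M + 1)) < e).
  { apply Rmult_lt_reg_r with (/ (6 * (1 + d) * (2 + d) * (M + 1))). { apply Rinv_0_lt_compat; repeat apply Rmult_lt_0_compat; lra. }
    rewrite Rmult_assoc, Rinv_r, Rmult_1_r by (repeat apply Rmult_integral_contrapositive_currified; lra). exact T1. }
  assert (Hb : b * (6 * (M + 1)) < e).
  { apply Rmult_lt_reg_r with (/ (6 * (M + 1))). { apply Rinv_0_lt_compat; lra. }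
    rewrite Rmult_assoc, Rinv_r, Rmult_1_r by lra. exact T2. }
  pose proof (bseq_nonneg (th d) N ltac:(lra)). fold b in H0.
  assert ((1 + d) * t <= t * (6 * (1 + d) * (2 + d) * (M + 1)) / 6).
  { assert (1 <= (2 + d) * (M + 1)) by nra. assert (0 <= t * (1 + d)) by nra.
    replace (t * (6 * (1 + d) * (2 + d) * (M + 1)) / 6) with ((t * (1 + d)) * ((2 + d) * (M + 1))) by field. nra. }
  assert ((2 + d) * t * M <= t * (6 * (1 + d) * (2 + d) * (M + 1)) / 6).
  { assert (M <= (1 + d) * (M + 1)) by nra. assert (0 <= t * (2 + d)) by nra.
    replace (t * (6 * (1 + d) * (2 + d) * (M + 1)) / 6) with ((t * (2 + d)) * ((1 + d) * (M + 1))) by field.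
    replace ((2 + d) * t * M) with ((t * (2 + d)) * M) by ring. nra. }
  assert (b * M <= b * (6 * (M + 1)) / 6) by nra.
  nra.
Qed.

Lemma gseq_pos d M N : 0 < d -> 0 <= M -> 0 < gseq d M N.
Proof.
  intros Hd HM. unfold gseq, cseq. pose proof (th_bounds d Hd). assert (0 <= th d ^ N) by (apply pow_le; lra).
  pose proof (bseq_nonneg (th d) N ltac:(lra)). assert (0 < (/ 2) ^ N) by (apply pow_lt; lra).
  assert (0 <= (bseq (th d) N + (2 + d) * th d ^ N) * M) by (apply Rmult_le_pos; nra).
  assert (0 <= (1 + d) * th d ^ N) by nra. lra.
Qed.

Lemma S2 u v d M : INC u -> DBL u d -> 0 < d -> ZYG u v M -> continuity v -> 0 <= M ->
  forall T, exists K, forall R0 r, Srel u v R0 r -> r <= T -> R0 <= K.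
Proof.
  intros Hu Hd Hd0 Hz Hv HM T.
  destruct (Rle_dec T 0) as [HT|HT].
  { exists 0. intros R0 r HS Hr. pose proof (S0 u v R0 r Hu HS). lra. }
  apply Rnot_le_lt in HT.
  destruct (gseq_to0 d M Hd0 HM (/ (2 * T))) as [N HN]. { apply Rinv_0_lt_compat; lra. }
  exists ((1 + d) * (2 + d) ^ N). intros R0 r [x [Ha [Hb [HA [HB [-> ->]]]]]] Hr.
  pose proof (mu_pos u x Ha Hu HA). pose proof (mu_pos u x Hb Hu HB).
  pose proof (Pd_pos u v x Ha Hu HA). pose proof (Pd_pos u v x Hb Hu HB).
  destruct (Rle_dec (Rabs Hb) ((/ 2) ^ N * Rabs Ha)) as [Hc|Hc].
  - exfalso. pose proof (FARQ u v d M x Ha Hb N Hu Hd Hd0 Hz Hv HM HA Hc).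
    pose proof (div_ge _ _ _ H1 H2 H3).
    assert (0 < gseq d M N).
    { apply gseq_pos; auto. }
    assert (T < 1 / (2 * gseq d M N)).
    { apply Rmult_lt_reg_r with (2 * gseq d M N); [lra|].
      replace (1 / (2 * gseq d M N) * (2 * gseq d M N)) with 1 by (field; lra).
      apply Rmult_lt_compat_l with (r := 2 * T) in HN; [|lra]. rewrite Rinv_r in HN by lra. lra. }
    lra.
  - apply Rnot_le_lt in Hc. pose proof (LOWB u d x Ha Hb N Hu Hd Hd0 HA ltac:(lra)).
    apply Rmult_le_reg_r with (mu_ u x Hb); auto.
    replace (mu_ u x Ha / mu_ u x Hb * mu_ u x Hb) with (mu_ u x Ha) by (field; lra). lra.
Qed.

Lemma S1 u v d M : INC u -> DBL u d -> 0 < d -> ZYG u v M -> continuity v -> 0 <= M ->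
  forall e, 0 < e -> exists tau, 0 < tau /\ forall R0 r, Srel u v R0 r -> r <= tau -> R0 <= e.
Proof.
  intros Hu Hd Hd0 Hz Hv HM e He. pose proof (th_bounds d Hd0).
  destruct (geo_to0 (th d) ltac:(lra) (e / (1 + d)) ltac:(apply Rdiv_lt_0_compat; lra)) as [N HN].
  specialize (HN N (le_n N)).
  assert (Hg0 : 0 < gseq d M 0) by (apply gseq_pos; auto).
  set (C1 := 2 ^ N * (1 + ((/ 2) ^ N + (3 + d) * M) * ((1 + d) * (2 + d) ^ N))).
  assert (HC1 : 0 < C1).
  { unfold C1. assert (0 < 2 ^ N) by (apply pow_lt; lra). assert (0 < (/2) ^ N) by (apply pow_lt; lra).
    assert (0 < (2 + d) ^ N) by (apply pow_lt; lra). apply Rmult_lt_0_compat; auto.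
    assert (0 <= (/ 2) ^ N + (3 + d) * M) by nra. assert (0 < (1 + d) * (2 + d) ^ N) by nra.
    pose proof (Rmult_le_pos _ _ H3 (Rlt_le _ _ H4)). lra. }
  exists (Rmin (1 / (2 * gseq d M 0)) (1 / C1) / 2). split.
  { assert (0 < 1 / (2 * gseq d M 0)) by (apply Rdiv_lt_0_compat; lra).
    assert (0 < 1 / C1) by (apply Rdiv_lt_0_compat; lra).
    assert (0 < Rmin (1 / (2 * gseq d M 0)) (1 / C1)) by (apply Rmin_glb_lt; auto). lra. }
  intros R0 r [x [Ha [Hb [HA [HB [-> ->]]]]]] Hr.
  pose proof (mu_pos u x Ha Hu HA) as mA. pose proof (mu_pos u x Hb Hu HB) as mB.
  pose proof (Pd_pos u v x Ha Hu HA) as PA. pose proof (Pd_pos u v x Hb Hu HB) as PB.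
  pose proof (Rmin_l (1 / (2 * gseq d M 0)) (1 / C1)). pose proof (Rmin_r (1 / (2 * gseq d M 0)) (1 / C1)).
  assert (0 < 1 / (2 * gseq d M 0)) by (apply Rdiv_lt_0_compat; lra).
  assert (0 < 1 / C1) by (apply Rdiv_lt_0_compat; lra).
  destruct (Rle_dec (Rabs Ha) ((/ 2) ^ N * Rabs Hb)) as [Hc|Hc].
  - pose proof (UB u d x Hb Ha N Hu Hd Hd0 HB Hc).
    apply Rmult_le_reg_r with (mu_ u x Hb); auto.
    replace (mu_ u x Ha / mu_ u x Hb * mu_ u x Hb) with (mu_ u x Ha) by (field; lra).
    assert ((1 + d) * th d ^ N <= e).
    { apply Rmult_le_reg_r with (/ (1 + d)). { apply Rinv_0_lt_compat; lra. }
      replace ((1 + d) * th d ^ N * / (1 + d)) with (th d ^ N) by (field; lra).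
      unfold Rdiv in HN. lra. }
    nra.
  - exfalso. apply Rnot_le_lt in Hc.
    destruct (Rle_dec (Rabs Hb) (Rabs Ha)) as [Hc2|Hc2].
    + pose proof (FARQ u v d M x Ha Hb 0 Hu Hd Hd0 Hz Hv HM HA ltac:(simpl; lra)) as Hf.
      pose proof (div_ge _ _ _ PA PB Hf). lra.
    + apply Rnot_le_lt in Hc2.
      destruct (VB u v d M x Hb Ha 0 Hu Hd Hd0 Hz Hv HM HB ltac:(simpl; lra)) as [_ V2].
      pose proof (LOWB u d x Hb Ha N Hu Hd Hd0 HB ltac:(lra)) as L.
      pose proof (lam_lower Hb Ha ((/ 2) ^ N) HB ltac:(lra)) as Hlam.
      assert (Hc0 : cseq d 0 = 3 + d) by (unfold cseq; simpl; ring).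
      rewrite Hc0 in V2.
      pose proof (Pd_le u v x Hb). pose proof (Pd_ge_A u v x Ha). pose proof (Pd_ge_D u v x Ha).
      pose proof (Rabs_pos (v (x + Hb) - v x)).
      assert (Hp2 : 0 < (/ 2) ^ N) by (apply pow_lt; lra).
      assert ((/ 2) ^ N * Rabs (v (x + Hb) - v x) <= Rabs Ha / Rabs Hb * Rabs (v (x + Hb) - v x)).
      { apply Rmult_le_compat_r; lra. }
      assert (Hkey : (/ 2) ^ N * Pd u v x Hb <= (1 + ((/ 2) ^ N + (3 + d) * M) * ((1 + d) * (2 + d) ^ N)) * Pd u v x Ha).
      { assert ((/ 2) ^ N * Pd u v x Hb <= Pd u v x Ha + ((/ 2) ^ N + (3 + d) * M) * mu_ u x Hb) by nra.
        assert (0 <= ((/ 2) ^ N + (3 + d) * M)) by nra.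
        assert (((/ 2) ^ N + (3 + d) * M) * mu_ u x Hb <= ((/ 2) ^ N + (3 + d) * M) * ((1 + d) * (2 + d) ^ N * Pd u v x Ha)).
        { apply Rmult_le_compat_l; auto. assert (0 <= (1 + d) * (2 + d) ^ N) by (assert (0 < (2+d)^N) by (apply pow_lt; lra); nra). nra. }
        nra. }
      assert (Hf : Pd u v x Hb <= C1 * Pd u v x Ha).
      { unfold C1. apply Rmult_le_reg_l with ((/ 2) ^ N); auto.
        replace ((/ 2) ^ N * (2 ^ N * (1 + ((/ 2) ^ N + (3 + d) * M) * ((1 + d) * (2 + d) ^ N)) * Pd u v x Ha))
          with (((/ 2) ^ N * 2 ^ N) * ((1 + ((/ 2) ^ N + (3 + d) * M) * ((1 + d) * (2 + d) ^ N)) * Pd u v x Ha)) by ring.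
        rewrite <- Rpow_mult_distr, Rinv_l, pow1 by lra. lra. }
      pose proof (div_ge _ _ _ PA PB Hf). lra.
Qed.

Lemma CHORD2 u w K x L H : INC u -> ZYG u w K -> continuity w -> 0 <= K -> 0 < L -> Rabs H <= L ->
  Rabs (w (x + H) - w x - H / (2 * L) * (w (x + L) - w (x - L))) <= 2 * K * (u (x + L) - u (x - L)).
Proof.
  intros Hu Hz Hw HK HL HH.
  assert (HH' : - L <= H <= L) by (unfold Rabs in HH; destruct Rcase_abs in HH; lra).
  set (p := x - L).
  assert (Hl1 : 0 <= (H + L) / (2 * L) <= 1).
  { split; [apply Rdiv_le_0_compat; lra|]. apply Rmult_le_reg_r with (2 * L); [lra|].
    replace ((H + L) / (2 * L) * (2 * L)) with (H + L) by (field; lra). lra. }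
  pose proof (CL u w K p (2 * L) ((H + L) / (2 * L)) Hu Hz Hw HK Hl1) as C1.
  pose proof (CL u w K p (2 * L) (1 / 2) Hu Hz Hw HK ltac:(lra)) as C2.
  replace (p + (H + L) / (2 * L) * (2 * L)) with (x + H) in C1 by (unfold p; field; lra).
  replace (p + 1 / 2 * (2 * L)) with x in C2 by (unfold p; field).
  replace (p + 2 * L) with (x + L) in C1, C2 by (unfold p; ring).
  rewrite mu_pos_eq in C1, C2 by (auto; lra). replace (p + 2 * L) with (x + L) in C1, C2 by (unfold p; ring).
  unfold p in *.
  replace (w (x + H) - w x - H / (2 * L) * (w (x + L) - w (x - L))) with
    ((w (x + H) - w (x - L) - (H + L) / (2 * L) * (w (x + L) - w (x - L))) -
     (w x - w (x - L) - 1 / 2 * (w (x + L) - w (x - L)))) by (field; lra).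
  eapply Rle_trans; [apply Rabs_triang|]. rewrite Rabs_Ropp. lra.
Qed.

Lemma sqrt_scale k b H : sqrt ((k * H) ^ 2 + (b * H) ^ 2) = sqrt (k ^ 2 + b ^ 2) * Rabs H.
Proof.
  replace ((k * H) ^ 2 + (b * H) ^ 2) with ((k ^ 2 + b ^ 2) * (H * H)) by ring.
  rewrite sqrt_mult_alt by nra. rewrite sqrt_square_abs || (rewrite <- Rsqr_def || idtac). 
  f_equal. rewrite <- sqrt_Rsqr_abs. reflexivity.
Qed.

Definition kap (u : R -> R) x L := (u (x + L) - u (x - L)) / (2 * L).

Lemma ONE u v d M x L H N : INC u -> ZYG u u d -> ZYG u v M -> continuity u -> continuity v ->
  0 <= d -> 0 <= M -> 0 < L -> Rabs H <= L -> L <= 2 ^ N * Rabs H ->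
  kap u x L * Rabs H * (1 - 2 ^ (N + 2) * (d + M)) <= mu_ u x H <= kap u x L * Rabs H * (1 + 2 ^ (N + 2) * (d + M)) /\
  sqrt (kap u x L ^ 2 + kap v x L ^ 2) * Rabs H * (1 - 2 ^ (N + 2) * (d + M)) <= Pd u v x H <=
  sqrt (kap u x L ^ 2 + kap v x L ^ 2) * Rabs H * (1 + 2 ^ (N + 2) * (d + M)).
Proof.
  intros Hu Hzu Hzv Hcu Hcv Hd HM HL HH HN.
  pose proof (CHORD2 u u d x L H Hu Hzu Hcu Hd HL HH) as Cu.
  pose proof (CHORD2 u v M x L H Hu Hzv Hcv HM HL HH) as Cv.
  set (k := kap u x L). set (b := kap v x L).
  set (U := u (x + L) - u (x - L)) in *.
  assert (HU : 0 < U) by (unfold U; pose proof (Hu (x - L) (x + L) ltac:(lra)); lra).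
  assert (Hk : k = U / (2 * L)) by reflexivity.
  assert (Hkpos : 0 < k) by (rewrite Hk; apply Rdiv_lt_0_compat; lra).
  replace (H / (2 * L) * U) with (k * H) in Cu by (rewrite Hk; field; lra).
  replace (H / (2 * L) * (v (x + L) - v (x - L))) with (b * H) in Cv by (unfold b, kap; field; lra).
  assert (Hp2 : 2 ^ (N + 2) = 4 * 2 ^ N) by (rewrite pow_add; simpl; ring).
  assert (HUk : U <= 2 * 2 ^ N * k * Rabs H).
  { replace U with (2 * L * k) by (rewrite Hk; field; lra). nra. }
  set (e1 := u (x + H) - u x - k * H) in *. set (e2 := v (x + H) - v x - b * H) in *.
  set (E := 2 ^ (N + 2) * (d + M)).
  assert (Hpn : 0 < 2 ^ N) by (apply pow_lt; lra).
  assert (HaH : 0 <= Rabs H) by apply Rabs_pos.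
  assert (Hkh : 0 <= k * Rabs H) by nra.
  assert (He1 : Rabs e1 <= 2 ^ (N + 2) * d * (k * Rabs H)).
  { rewrite Hp2. apply Rle_trans with (2 * d * U); [lra|]. nra. }
  assert (He2 : Rabs e2 <= 2 ^ (N + 2) * M * (k * Rabs H)).
  { rewrite Hp2. apply Rle_trans with (2 * M * U); [lra|]. nra. }
  assert (HE : Rabs e1 + Rabs e2 <= E * (k * Rabs H)) by (unfold E; nra).
  assert (HkH : Rabs (k * H) = k * Rabs H) by (rewrite Rabs_mult, Rabs_right; lra).
  set (s := sqrt (k ^ 2 + b ^ 2)).
  assert (Hks : k <= s).
  { unfold s. rewrite <- (sqrt_pow2 k) at 1 by lra. apply sqrt_le_1_alt. pose proof (pow2_ge_0 b). lra. }
  assert (Hsc : sqrt ((k * H) ^ 2 + (b * H) ^ 2) = s * Rabs H) by apply sqrt_scale.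
  assert (Hsh : 0 <= s * Rabs H) by (apply Rmult_le_pos; [unfold s; apply sqrt_pos| auto]).
  assert (HPd : Pd u v x H = sqrt ((k * H + e1) ^ 2 + (b * H + e2) ^ 2)).
  { unfold Pd. f_equal. unfold e1, e2. ring. }
  pose proof (norm_tri (k * H) (b * H) e1 e2) as N1.
  pose proof (norm_tri' (k * H) (b * H) e1 e2) as N2.
  rewrite Hsc, <- HPd in N1, N2.
  assert (HE0 : 0 <= Rabs e1) by apply Rabs_pos. pose proof (Rabs_pos e2).
  assert (Hmu : mu_ u x H = Rabs (k * H + e1)) by (unfold mu_, e1; f_equal; ring).
  pose proof (Rabs_triang (k * H) e1) as T1.
  pose proof (Rabs_triang (k * H + e1) (- e1)) as T2. rewrite Rabs_Ropp in T2.
  replace (k * H + e1 + - e1) with (k * H) in T2 by ring.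
  assert (E * (k * Rabs H) <= E * (s * Rabs H)).
  { apply Rmult_le_compat_l; [unfold E; nra|]. apply Rmult_le_compat_r; auto. }
  split; split; nra.
Qed.

Lemma FLAT u v d M x Ha Hb N : INC u -> ZYG u u d -> ZYG u v M -> continuity u -> continuity v ->
  0 <= d -> 0 <= M -> Ha <> 0 -> Hb <> 0 ->
  (/ 2) ^ N * Rabs Hb <= Rabs Ha -> (/ 2) ^ N * Rabs Ha <= Rabs Hb ->
  2 ^ (N + 2) * (d + M) <= 1 / 2 ->
  mu_ u x Ha * Pd u v x Hb <= (1 + 16 * (2 ^ (N + 2) * (d + M))) * (Pd u v x Ha * mu_ u x Hb).
Proof.
  intros Hu Hzu Hzv Hcu Hcv Hd HM HA HB H1 H2 HE.
  set (L := Rmax (Rabs Ha) (Rabs Hb)).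
  assert (Hp : 1 <= 2 ^ N) by (apply pow_R1_Rle; lra).
  assert (Hinv : 2 ^ N * (/ 2) ^ N = 1) by (rewrite <- Rpow_mult_distr, Rinv_r, pow1; lra).
  pose proof (Rabs_pos_lt Ha HA). pose proof (Rabs_pos_lt Hb HB).
  assert (HLa : L <= 2 ^ N * Rabs Ha).
  { unfold L, Rmax. destruct Rle_dec; [|nra].
    apply Rmult_le_compat_l with (r := 2 ^ N) in H1; [|lra]. rewrite <- Rmult_assoc, Hinv in H1. lra. }
  assert (HLb : L <= 2 ^ N * Rabs Hb).
  { unfold L, Rmax. destruct Rle_dec; [nra|].
    apply Rmult_le_compat_l with (r := 2 ^ N) in H2; [|lra]. rewrite <- Rmult_assoc, Hinv in H2. lra. }
  assert (HL : 0 < L) by (unfold L; eapply Rlt_le_trans; [exact H|apply Rmax_l]).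
  destruct (ONE u v d M x L Ha N Hu Hzu Hzv Hcu Hcv Hd HM HL (Rmax_l _ _) HLa) as [[A1 A2] [P1 P2]].
  destruct (ONE u v d M x L Hb N Hu Hzu Hzv Hcu Hcv Hd HM HL (Rmax_r _ _) HLb) as [[B1 B2] [Q1 Q2]].
  set (k := kap u x L) in *. set (s := sqrt (k ^ 2 + kap v x L ^ 2)) in *.
  set (E := 2 ^ (N + 2) * (d + M)) in *.
  assert (HE0 : 0 <= E) by (unfold E; assert (0 < 2 ^ (N + 2)) by (apply pow_lt; lra); nra).
  assert (Hk : 0 <= k).
  { unfold k, kap. apply Rdiv_le_0_compat; [|lra]. pose proof (INC_le u Hu (x - L) (x + L) ltac:(lra)). lra. }
  assert (Hs : 0 <= s) by (unfold s; apply sqrt_pos).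
  set (X := k * s * Rabs Ha * Rabs Hb).
  assert (HX : 0 <= X) by (unfold X; apply Rmult_le_pos; [apply Rmult_le_pos; [apply Rmult_le_pos|]|]; lra).
  assert (T1 : mu_ u x Ha * Pd u v x Hb <= X * (1 + E) ^ 2).
  { pose proof (mu_nonneg u x Ha). assert (0 <= Pd u v x Hb) by (unfold Pd; apply sqrt_pos).
    apply Rle_trans with ((k * Rabs Ha * (1 + E)) * (s * Rabs Hb * (1 + E))).
    - apply Rmult_le_compat; auto.
    - right. unfold X. ring. }
  assert (T2 : X * (1 - E) ^ 2 <= Pd u v x Ha * mu_ u x Hb).
  { apply Rle_trans with ((s * Rabs Ha * (1 - E)) * (k * Rabs Hb * (1 - E))).
    - right. unfold X. ring.
    - assert (0 <= s * Rabs Ha) by nra. assert (0 <= k * Rabs Hb) by nra.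
      apply Rmult_le_compat; [nra|nra|lra|lra]. }
  assert (Hpoly : (1 + E) ^ 2 <= (1 + 16 * E) * (1 - E) ^ 2).
  { assert (0 <= E * (1 - 2 * E)) by nra. assert (0 <= E * (1 - 2 * E) * (3 - 2 * E)) by nra.
    replace ((1 + 16 * E) * (1 - E) ^ 2) with ((1 + E) ^ 2 + 4 * (E * (1 - 2 * E) * (3 - 2 * E))) by ring. lra. }
  assert (X * (1 + E) ^ 2 <= (1 + 16 * E) * (X * (1 - E) ^ 2)).
  { replace ((1 + 16 * E) * (X * (1 - E) ^ 2)) with (X * ((1 + 16 * E) * (1 - E) ^ 2)) by ring.
    apply Rmult_le_compat_l; auto. }
  assert ((1 + 16 * E) * (X * (1 - E) ^ 2) <= (1 + 16 * E) * (Pd u v x Ha * mu_ u x Hb)).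
  { apply Rmult_le_compat_l; lra. }
  lra.
Qed.

Lemma th_le d : 0 < d -> d <= 1 -> th d <= 2 / 3.
Proof. intros. unfold th. apply Rmult_le_reg_r with (2 + d); [lra|].
  replace ((1 + d) / (2 + d) * (2 + d)) with (1 + d) by (field; lra). lra. Qed.

Lemma S3 s : 0 < s -> exists eps, 0 < eps /\ forall u v d M,
  INC u -> DBL u d -> 0 < d -> ZYG u v M -> continuity u -> continuity v -> 0 <= M ->
  d <= eps -> M <= 2 * eps ->
  forall R0 r, Srel u v R0 r -> r <= 2 / s -> R0 <= r + s / 2.
Proof.
  intros Hs.
  assert (Hb23 : forall n, 0 <= bseq (2 / 3) n) by (intros; apply bseq_nonneg; lra).
  destruct (ev_and _ _ (geo_to0 (2 / 3) ltac:(lra) (s / 32) ltac:(lra))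
     (ev_and _ _ (rec_to0 (bseq (2 / 3)) (2 / 3) ltac:(lra) Hb23 (fun n => Rle_refl _) (s / 32) ltac:(lra))
                 (geo_to0 (/ 2) ltac:(lra) (s / 32) ltac:(lra)))) as [N HN].
  destruct (HN N (le_n N)) as [G1 [G2 G3]].
  assert (Hp2 : 0 < 2 ^ (N + 2)) by (apply pow_lt; lra).
  set (m := Rmin (1 / 2) (s * s / 64)).
  assert (Hm : 0 < m) by (unfold m; apply Rmin_glb_lt; nra).
  exists (m / (3 * 2 ^ (N + 2))). split; [apply Rdiv_lt_0_compat; lra|].
  intros u v d M Hu Hd Hd0 Hz Hcu Hcv HM Hde HMe R0 r [x [Ha [Hb [HA [HB [-> ->]]]]]] Hr.
  assert (HE : 2 ^ (N + 2) * (d + M) <= m).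
  { assert (d + M <= 3 * (m / (3 * 2 ^ (N + 2)))) by lra.
    apply Rle_trans with (2 ^ (N + 2) * (3 * (m / (3 * 2 ^ (N + 2))))); [apply Rmult_le_compat_l; lra|].
    right. field. lra. }
  assert (Hm1 : m <= 1 / 2) by apply Rmin_l. assert (Hm2 : m <= s * s / 64) by apply Rmin_r.
  assert (Hd1 : d <= 1) by (assert (2 ^ (N + 2) * d <= 1 / 2) by nra; assert (1 <= 2 ^ (N + 2)) by (apply pow_R1_Rle; lra); nra).
  assert (HM1 : M <= 1) by (assert (2 ^ (N + 2) * M <= 1 / 2) by nra; assert (1 <= 2 ^ (N + 2)) by (apply pow_R1_Rle; lra); nra).
  pose proof (mu_pos u x Ha Hu HA) as mA. pose proof (mu_pos u x Hb Hu HB) as mB.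
  pose proof (Pd_pos u v x Ha Hu HA) as PA. pose proof (Pd_pos u v x Hb Hu HB) as PB.
  pose proof (th_le d Hd0 Hd1) as Hth. pose proof (th_bounds d Hd0).
  assert (Hthn : th d ^ N <= (2 / 3) ^ N) by (apply pow_incr; lra).
  assert (Hr0 : 0 < Pd u v x Ha / Pd u v x Hb) by (apply Rdiv_lt_0_compat; auto).
  destruct (Rle_dec (Rabs Ha) ((/ 2) ^ N * Rabs Hb)) as [C3|C3].
  - pose proof (UB u d x Hb Ha N Hu Hd Hd0 HB C3) as U.
    assert (mu_ u x Ha / mu_ u x Hb <= s / 2).
    { apply Rmult_le_reg_r with (mu_ u x Hb); auto.
      replace (mu_ u x Ha / mu_ u x Hb * mu_ u x Hb) with (mu_ u x Ha) by (field; lra).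
      assert ((1 + d) * th d ^ N <= s / 2).
      { assert (0 <= th d ^ N) by (apply pow_le; lra). nra. }
      nra. }
    lra.
  - apply Rnot_le_lt in C3.
    destruct (Rle_dec (Rabs Hb) ((/ 2) ^ N * Rabs Ha)) as [C2|C2].
    + exfalso. pose proof (FARQ u v d M x Ha Hb N Hu Hd Hd0 Hz Hcv HM HA C2) as F.
      assert (Hg : gseq d M N < s / 4).
      { unfold gseq, cseq.
        assert (0 <= th d ^ N) by (apply pow_le; lra).
        assert (bseq (th d) N <= bseq (2 / 3) N) by (apply bseq_mono; lra).
        assert ((1 + d) * th d ^ N <= 2 * (2 / 3) ^ N) by nra.
        assert ((bseq (th d) N + (2 + d) * th d ^ N) * M <= bseq (2 / 3) N + 3 * (2 / 3) ^ N).
        { assert (0 <= bseq (th d) N + (2 + d) * th d ^ N) by (pose proof (bseq_nonneg (th d) N ltac:(lra)); nra).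
          apply Rle_trans with (bseq (th d) N + (2 + d) * th d ^ N); [nra|nra]. }
        lra. }
      pose proof (gseq_pos d M N Hd0 HM).
      pose proof (div_ge _ _ _ PA PB F).
      assert (2 / s < 1 / (2 * gseq d M N)).
      { apply Rmult_lt_reg_r with (s * (2 * gseq d M N)); [nra|].
        replace (2 / s * (s * (2 * gseq d M N))) with (4 * gseq d M N) by (field; lra).
        replace (1 / (2 * gseq d M N) * (s * (2 * gseq d M N))) with s by (field; lra). lra. }
      lra.
    + apply Rnot_le_lt in C2.
      pose proof (zyg_u u d Hu Hd Hd0) as Hzu.
      pose proof (FLAT u v d M x Ha Hb N Hu Hzu Hz Hcu Hcv ltac:(lra) HM HA HB ltac:(lra) ltac:(lra) ltac:(lra)) as F.
      set (E := 2 ^ (N + 2) * (d + M)) in *.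
      assert (HE0 : 0 <= E) by (unfold E; nra).
      assert (mu_ u x Ha / mu_ u x Hb <= (1 + 16 * E) * (Pd u v x Ha / Pd u v x Hb)).
      { apply Rmult_le_reg_r with (mu_ u x Hb * Pd u v x Hb); [nra|].
        replace (mu_ u x Ha / mu_ u x Hb * (mu_ u x Hb * Pd u v x Hb)) with (mu_ u x Ha * Pd u v x Hb) by (field; lra).
        replace ((1 + 16 * E) * (Pd u v x Ha / Pd u v x Hb) * (mu_ u x Hb * Pd u v x Hb)) with
          ((1 + 16 * E) * (Pd u v x Ha * mu_ u x Hb)) by (field; lra). lra. }
      assert (16 * E * (Pd u v x Ha / Pd u v x Hb) <= s / 2).
      { apply Rle_trans with (16 * (s * s / 64) * (2 / s)).
        - apply Rmult_le_compat; try nra.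
        - right. field. lra. }
      nra.
Qed.

Lemma borel_ext (A B : R -> Prop) : (forall x, A x <-> B x) -> borel A -> borel B.
Proof.
  intros H HA. assert (A = B) as <-; auto.
  apply functional_extensionality. intros x. apply propositional_extensionality. auto.
Qed.

Lemma open_abs_lt c : open_set (fun x => Rabs x < c).
Proof.
  intros x Hx. assert (Hp : 0 < c - Rabs x) by lra.
  exists (mkposreal _ Hp). intros y Hy. unfold disc in Hy. simpl in Hy.
  pose proof (Rabs_triang_inv y x). pose proof (Rabs_triang (y - x) x).
  replace (y - x + x) with y in H0 by ring. lra.
Qed.

Lemma open_out a b : open_set (fun x => x < a \/ b < x).
Proof.
  intros x [Hx|Hx].
  - assert (Hp : 0 < a - x) by lra. exists (mkposreal _ Hp). intros y Hy. unfold disc in Hy. simpl in Hy.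
    left. apply Rabs_def2 in Hy. lra.
  - assert (Hp : 0 < x - b) by lra. exists (mkposreal _ Hp). intros y Hy. unfold disc in Hy. simpl in Hy.
    right. apply Rabs_def2 in Hy. lra.
Qed.

Lemma open_true : open_set (fun _ => True).
Proof. intros x _. exists (mkposreal 1 ltac:(lra)). intros y _. exact I. Qed.

Lemma borel_Icc a b : borel (Icc a b).
Proof.
  apply borel_ext with (fun x => ~ (x < a \/ b < x)).
  - intros x. unfold Icc. split; intros H; [split; apply Rnot_lt_le; tauto| lra].
  - apply borel_compl, borel_open, open_out.
Qed.

Lemma borel_empty : borel (fun _ => False).
Proof. apply borel_ext with (fun x => ~ True); [tauto|]. apply borel_compl, borel_open, open_true. Qed.

Lemma borel_inter A B : borel A -> borel B -> borel (fun x => A x /\ B x).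
Proof.
  intros HA HB.
  apply borel_ext with (fun x => ~ (exists n : nat, (fun k : nat => match k with O => (fun y => ~ A y) | _ => (fun y => ~ B y) end) n x)).
  - intros x. split.
    + intros H. split; apply NNPP; intros Hn; apply H; [exists O| exists 1%nat]; auto.
    + intros [H1 H2] [n Hn]. destruct n; auto.
  - apply borel_compl, borel_union. intros [|n]; apply borel_compl; auto.
Qed.

Lemma mono_zero mu A B : borel_measure mu -> borel A -> borel B -> (forall x, A x -> B x) ->
  mu B = EFin 0 -> mu A = EFin 0.
Proof.
  intros [Mext [M0 [Mnn Madd]]] HA HB Hsub HmB.
  set (F := fun k : nat => match k with O => A | 1%nat => (fun x => B x /\ ~ A x) | _ => (fun _ => False) end).
  assert (HF : forall n, borel (F n)).
  { intros [|[|n]]; simpl; auto. apply borel_inter; auto. apply borel_compl; auto. apply borel_empty. }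
  assert (Hdisj : forall n m x, n <> m -> F n x -> F m x -> False).
  { intros [|[|n]] [|[|m]] x Hnm; simpl; tauto. }
  destruct (Madd F HF Hdisj) as [Hs _].
  assert (Hu : mu (fun x => exists n, F n x) = mu B).
  { apply Mext. intros x. split.
    - intros [[|[|n]] Hn]; simpl in Hn; try tauto. auto.
    - intros Hb. destruct (classic (A x)); [exists O| exists 1%nat]; simpl; auto. }
  rewrite Hu, HmB in Hs. specialize (Hs 1%nat). simpl in Hs.
  destruct (mu A) as [a|] eqn:Ea; [|simpl in Hs; contradiction].
  destruct (mu (fun x => B x /\ ~ A x)) as [c|] eqn:Ec; [|simpl in Hs; contradiction].
  simpl in Hs. assert (0 <= a) by (apply (Mnn A); auto).
  assert (0 <= c) by (apply (Mnn (fun x => B x /\ ~ A x)); auto; apply borel_inter; auto; apply borel_compl; auto).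
  f_equal. lra.
Qed.

Lemma epartial_zero f : (forall n, f n = EFin 0) -> forall n, epartial f n = EFin 0.
Proof. intros H n. induction n; simpl; rewrite ?IHn, ?H; simpl; auto. f_equal. ring. Qed.

Lemma all_zero mu : borel_measure mu -> (forall n : nat, mu (Icc (- INR (S n)) (INR (S n))) = EFin 0) ->
  forall A, borel A -> mu A = EFin 0.
Proof.
  intros Hm HI A HA. pose proof Hm as [Mext [M0 [Mnn Madd]]].
  set (D := fun n : nat => fun x => A x /\ (Rabs x < INR (S n) /\ ~ (Rabs x < INR n))).
  assert (HD : forall n, borel (D n)).
  { intros n. apply borel_inter; auto. apply borel_inter; [apply borel_open, open_abs_lt|]. apply borel_compl, borel_open, open_abs_lt. }
  assert (Hdisj : forall n m x, n <> m -> D n x -> D m x -> False).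
  { intros n m x Hnm [_ [H1 H2]] [_ [H3 H4]].
    destruct (Nat.lt_total n m) as [Hl|[He|Hl]]; [|tauto|].
    - apply H4. apply Rlt_le_trans with (INR (S n)); auto. apply le_INR. lia.
    - apply H2. apply Rlt_le_trans with (INR (S m)); auto. apply le_INR. lia. }
  destruct (Madd D HD Hdisj) as [_ Hs].
  assert (Hz : forall n, mu (D n) = EFin 0).
  { intros n. apply (mono_zero mu (D n) (Icc (- INR (S n)) (INR (S n)))); auto.
    - apply borel_Icc.
    - intros x [_ [H1 _]]. unfold Icc.
      unfold Rabs in H1. destruct Rcase_abs in H1; lra. }
  assert (Hu : mu (fun x => exists n, D n x) = mu A).
  { apply Mext. intros x. split.
    - intros [n [Hn _]]; auto.
    - intros Hx. destruct (INR_archimed 1 (Rabs x)) as [N HN]; [lra|]. rewrite Rmult_1_r in HN.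
      assert (forall k, Rabs x < INR k -> exists n, D n x).
      { induction k; intros Hk.
        - simpl in Hk. pose proof (Rabs_pos x). lra.
        - destruct (Rlt_dec (Rabs x) (INR k)) as [Hl|Hl]; auto.
          exists k. unfold D. auto. }
      apply (H N). lra. }
  rewrite Hu in Hs. specialize (Hs (EFin 0)).
  assert (Hle : ele (mu A) (EFin 0)).
  { apply Hs. intros n. rewrite (epartial_zero _ Hz). simpl. lra. }
  destruct (mu A) as [a|] eqn:Ea; [|simpl in Hle; contradiction].
  simpl in Hle. assert (0 <= a) by (apply (Mnn A); auto). f_equal. lra.
Qed.

Lemma u_nondec mu u : borel_measure mu -> (forall a b, a < b -> mu (Icc a b) = EFin (u b - u a)) ->
  forall a b, a <= b -> u a <= u b.
Proof.
  intros [_ [_ [Mnn _]]] Hr a b [Hab|Hab]; [|subst; lra].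
  assert (0 <= u b - u a) by (apply (Mnn (Icc a b)); [apply borel_Icc| apply Hr; auto]). lra.
Qed.

Lemma DBL_of mu d u : doubling mu d -> (forall a b, a < b -> mu (Icc a b) = EFin (u b - u a)) -> DBL u d.
Proof.
  intros Hd Hr x h Hh. apply (Hd x h); auto; apply Hr; lra.
Qed.

Lemma ZYG_of mu u v M : zygmund_bound mu v M -> (forall a b, a < b -> mu (Icc a b) = EFin (u b - u a)) -> ZYG u v M.
Proof. intros Hz Hr x h Hh. apply Hz; [lra|]. apply Hr; lra. Qed.

Lemma const_of u d : (forall a b, a <= b -> u a <= u b) -> DBL u d -> 0 < d ->
  forall a b, a < b -> u a = u b -> forall p q, u p = u q.
Proof.
  intros Hm Hd Hd0 a b Hab Heq.
  set (l := b - a).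
  assert (Hstep : forall p q, p < q -> u p = u q -> u (2 * p - q) = u (2 * q - p)).
  { intros p q Hpq Hpq'. destruct (Hd q (q - p) ltac:(lra)) as [_ D2].
    destruct (Hd p (q - p) ltac:(lra)) as [D1 _].
    replace (q - (q - p)) with p in D2 by ring. replace (q + (q - p)) with (2 * q - p) in D2 by ring.
    replace (p - (q - p)) with (2 * p - q) in D1 by ring. replace (p + (q - p)) with q in D1 by ring.
    pose proof (Hm q (2 * q - p) ltac:(lra)). pose proof (Hm (2 * p - q) p ltac:(lra)). nra. }
  assert (Hn : forall n : nat, u (a - INR n * l) = u (b + INR n * l)).
  { induction n.
    - simpl. rewrite !Rmult_0_l, Rminus_0_r, Rplus_0_r. auto.
    - assert (0 <= INR n) by apply pos_INR.
      assert (Hl : 0 < l) by (unfold l; lra).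
      pose proof (Hstep (a - INR n * l) (b + INR n * l) ltac:(nra) IHn).
      rewrite S_INR.
      pose proof (Hm (2 * (a - INR n * l) - (b + INR n * l)) (a - (INR n + 1) * l) ltac:(unfold l in *; nra)).
      pose proof (Hm (a - (INR n + 1) * l) (b + (INR n + 1) * l) ltac:(nra)).
      pose proof (Hm (b + (INR n + 1) * l) (2 * (b + INR n * l) - (a - INR n * l)) ltac:(unfold l in *; nra)).
      lra. }
  assert (Hall : forall p, u p = u a).
  { intros p. assert (Hl : 0 < l) by (unfold l; lra).
    destruct (INR_archimed l (Rabs p + Rabs a + Rabs b)) as [n Hn'] ; [lra|].
    pose proof (Hn n). pose proof (Rabs_pos p). pose proof (Rabs_pos a). pose proof (Rabs_pos b).
    pose proof (Rle_abs p). pose proof (Rle_abs (- p)). rewrite Rabs_Ropp in H4.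
    pose proof (Rle_abs a). pose proof (Rle_abs (- a)). rewrite Rabs_Ropp in H6.
    pose proof (Rle_abs b). pose proof (Rle_abs (- b)). rewrite Rabs_Ropp in H8.
    pose proof (Hm (a - INR n * l) p ltac:(lra)). pose proof (Hm p (b + INR n * l) ltac:(lra)).
    pose proof (Hm (a - INR n * l) a ltac:(nra)). pose proof (Hm a (b + INR n * l) ltac:(nra)).
    lra. }
  intros p q. rewrite (Hall p), (Hall q). auto.
Qed.

Lemma INC_of mu d u : radon_measure mu -> nonzero_measure mu -> 0 < d -> doubling mu d ->
  (forall a b, a < b -> mu (Icc a b) = EFin (u b - u a)) -> INC u.
Proof.
  intros [Hm _] [A [HA HA0]] Hd0 Hd Hr x y Hxy.
  pose proof (u_nondec mu u Hm Hr) as Hmono.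
  destruct (Rlt_dec (u x) (u y)) as [H|H]; auto. exfalso.
  assert (Heq : u x = u y) by (pose proof (Hmono x y ltac:(lra)); lra).
  pose proof (const_of u d Hmono (DBL_of mu d u Hd Hr) Hd0 x y Hxy Heq) as Hc.
  apply HA0. apply (all_zero mu Hm); auto.
  intros n. rewrite Hr. { rewrite (Hc (INR (S n)) (- INR (S n))). f_equal. ring. }
  pose proof (pos_INR n). rewrite S_INR. lra.
Qed.

Lemma cont_u u d : INC u -> DBL u d -> 0 < d -> continuity u.
Proof.
  intros Hu Hd Hd0. apply cont_of_econt. intros x e He.
  pose proof (th_bounds d Hd0).
  set (m := Rmax (mu_ u x 1) (mu_ u x (-1)) + 1).
  assert (Hm : 0 < m) by (unfold m; pose proof (Rmax_l (mu_ u x 1) (mu_ u x (-1))); pose proof (mu_nonneg u x 1); lra).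
  destruct (geo_to0 (th d) ltac:(lra) (e / m) ltac:(apply Rdiv_lt_0_compat; lra)) as [N HN].
  specialize (HN N (le_n N)).
  assert (HNm : th d ^ N * m < e).
  { apply Rmult_lt_reg_r with (/ m); [apply Rinv_0_lt_compat; lra|].
    rewrite Rmult_assoc, Rinv_r, Rmult_1_r by lra. exact HN. }
  assert (Hp : 0 < (/ 2) ^ N) by (apply pow_lt; lra).
  assert (Hpw : 0 <= th d ^ N) by (apply pow_le; lra).
  exists ((/ 2) ^ N). split; auto. intros y Hy. apply Rabs_def2 in Hy.
  destruct (iter u d x 1 N Hu Hd Hd0) as [I1 _].
  destruct (iter u d x (-1) N Hu Hd Hd0) as [I2 _].
  rewrite mu_pos_eq in I1 by (auto; lra). rewrite mu_neg_eq in I2 by (auto; lra).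
  pose proof (Rmax_l (mu_ u x 1) (mu_ u x (-1))). pose proof (Rmax_r (mu_ u x 1) (mu_ u x (-1))).
  assert (th d ^ N * mu_ u x 1 <= th d ^ N * m) by (apply Rmult_le_compat_l; unfold m; lra).
  assert (th d ^ N * mu_ u x (-1) <= th d ^ N * m) by (apply Rmult_le_compat_l; unfold m; lra).
  destruct (Rle_dec x y).
  - pose proof (INC_le u Hu x y r). pose proof (INC_le u Hu y (x + (/ 2) ^ N * 1) ltac:(lra)).
    rewrite Rabs_right by lra. lra.
  - pose proof (INC_le u Hu y x ltac:(lra)). pose proof (INC_le u Hu (x + (/ 2) ^ N * -1) y ltac:(lra)).
    rewrite Rabs_left1 by lra. lra.
Qed.

Lemma unb_u u d : INC u -> DBL u d -> 0 < d -> forall y, exists a b, u a <= y <= u b.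
Proof.
  intros Hu Hd Hd0 y. pose proof (th_bounds d Hd0).
  pose proof (mu_pos u 0 1 Hu ltac:(lra)) as m0. pose proof (mu_pos u 0 (-1) Hu ltac:(lra)) as m1.
  set (c := Rmin (mu_ u 0 1) (mu_ u 0 (-1))).
  assert (Hc : 0 < c) by (apply Rmin_glb_lt; auto).
  set (Y := Rabs (y - u 0) + 1).
  assert (HY : 0 < Y) by (unfold Y; pose proof (Rabs_pos (y - u 0)); lra).
  destruct (geo_to0 (th d) ltac:(lra) (c / Y) ltac:(apply Rdiv_lt_0_compat; lra)) as [N HN].
  specialize (HN N (le_n N)).
  assert (HNY : th d ^ N * Y < c).
  { apply Rmult_lt_reg_r with (/ Y); [apply Rinv_0_lt_compat; lra|].
    rewrite Rmult_assoc, Rinv_r, Rmult_1_r by lra. exact HN. }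
  assert (Hinv : (/ 2) ^ N * 2 ^ N = 1) by (rewrite <- Rpow_mult_distr, Rinv_l, pow1; lra).
  assert (Hp : 0 < 2 ^ N) by (apply pow_lt; lra).
  destruct (iter u d 0 (2 ^ N) N Hu Hd Hd0) as [I1 _].
  destruct (iter u d 0 (- 2 ^ N) N Hu Hd Hd0) as [I2 _].
  replace ((/ 2) ^ N * 2 ^ N) with 1 in I1 by lra.
  replace ((/ 2) ^ N * - 2 ^ N) with (-1) in I2 by lra.
  pose proof (Rmin_l (mu_ u 0 1) (mu_ u 0 (-1))). pose proof (Rmin_r (mu_ u 0 1) (mu_ u 0 (-1))).
  fold c in H0, H1.
  rewrite (mu_pos_eq u 0 (2 ^ N)) in I1 by (auto; lra). rewrite (mu_neg_eq u 0 (- 2 ^ N)) in I2 by (auto; lra).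
  assert (Hpw : 0 < th d ^ N) by (apply pow_lt; lra).
  pose proof (Rle_abs (y - u 0)). pose proof (Rle_abs (- (y - u 0))). rewrite Rabs_Ropp in H3.
  exists (0 + - 2 ^ N), (0 + 2 ^ N). split.
  - assert (th d ^ N * Y < th d ^ N * (u 0 - u (0 + - 2 ^ N))) by lra.
    apply Rmult_lt_reg_l in H4; auto. unfold Y in H4. lra.
  - assert (th d ^ N * Y < th d ^ N * (u (0 + 2 ^ N) - u 0)) by lra.
    apply Rmult_lt_reg_l in H4; auto. unfold Y in H4. lra.
Qed.

Lemma homeo_graph u v : INC u -> continuity u -> continuity v -> (forall y, exists a b, u a <= y <= u b) ->
  homeo_onto Cdist Rdist (graph_image u v) allR fst.
Proof.
  intros Hu Hcu Hcv Hs.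
  destruct (inverse_cont u Hcu Hu Hs) as [g [Hg1 [Hg2 Hg3]]].
  unfold homeo_onto. split; [|split; [|split]].
  - intros; exact I.
  - intros w1 w2 [t1 ->] [t2 ->]. simpl. intros Heq.
    assert (t1 = t2).
    { destruct (Rtotal_order t1 t2) as [H|[H|H]]; auto; apply Hu in H; lra. }
    subst; auto.
  - intros w _ e He. exists e. split; auto. intros w' _ Hw. unfold Rdist, Cdist in *.
    eapply Rle_lt_trans; [|exact Hw].
    rewrite <- sqrt_Rsqr_abs. apply sqrt_le_1_alt. pose proof (pow2_ge_0 (snd w' - snd w)). unfold Rsqr. simpl in *. lra.
  - exists (fun y => (y, v (g y))). split.
    + intros y _. split; [exists (g y); rewrite Hg1; auto| auto].
    + intros y _ e He. destruct (econt_all v Hcv (g y) (e / 2) ltac:(lra)) as [d1 [Hd1 Hv]].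
      destruct (Hg3 y d1 Hd1) as [d2 [Hd2 Hg]].
      exists (Rmin (e / 2) d2). split; [apply Rmin_glb_lt; lra|].
      intros y' _ Hy. unfold Rdist, Cdist in *. cbn [fst snd].
      pose proof (Rmin_l (e / 2) d2). pose proof (Rmin_r (e / 2) d2).
      pose proof (norm_tri 0 0 (y' - y) (v (g y') - v (g y))).
      rewrite !Rplus_0_l in H1. replace (0 ^ 2 + 0 ^ 2) with 0 in H1 by ring. rewrite sqrt_0 in H1.
      assert (Rabs (v (g y') - v (g y)) < e / 2) by (apply Hv; apply Hg; lra). lra.
Qed.

Lemma qs_of u v eta : INC u -> (forall R0 r, Srel u v R0 r -> R0 <= eta r) ->
  eta_qs Cdist Rdist (graph_image u v) fst eta.
Proof.
  intros Hu HS w wa wb [t ->] [ta ->] [tb ->] Hab Hxa Hxb. unfold Rdist, Cdist. cbn [fst snd].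
  assert (Ha : ta - t <> 0). { intros E. apply Hxa. replace ta with t by lra. auto. }
  assert (Hb : tb - t <> 0). { intros E. apply Hxb. replace tb with t by lra. auto. }
  assert (E1 : forall s, Rabs (u t - u s) = mu_ u t (s - t)).
  { intros s. unfold mu_. replace (t + (s - t)) with s by ring. apply Rabs_minus_sym. }
  assert (E2 : forall s, sqrt ((u t - u s) ^ 2 + (v t - v s) ^ 2) = Pd u v t (s - t)).
  { intros s. unfold Pd. replace (t + (s - t)) with s by ring. auto. }
  rewrite !E1, !E2.
  pose proof (mu_pos u t (tb - t) Hu Hb).
  specialize (HS (mu_ u t (ta - t) / mu_ u t (tb - t)) (Pd u v t (ta - t) / Pd u v t (tb - t))).
  assert (Srel u v (mu_ u t (ta - t) / mu_ u t (tb - t)) (Pd u v t (ta - t) / Pd u v t (tb - t))).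
  { exists t, (ta - t), (tb - t). auto. }
  specialize (HS H0).
  apply Rmult_le_reg_r with (/ mu_ u t (tb - t)); [apply Rinv_0_lt_compat; auto|].
  rewrite Rmult_assoc, Rinv_r, Rmult_1_r by lra. exact HS.
Qed.

Theorem theorem1p2 :
  (forall (mu : (R -> Prop) -> ereal) (delta : R) (u v : R -> R),
      radon_measure mu -> nonzero_measure mu ->
      0 < delta -> doubling mu delta ->
      (forall a b, a < b -> mu (Icc a b) = EFin (u b - u a)) ->
      in_Lambda mu v ->
      qs_graph (graph_image u v)) /\
  (forall s : R, 0 < s -> exists eps : R, 0 < eps /\
    forall (mu : (R -> Prop) -> ereal) (delta : R) (u v : R -> R) (N : R),
      radon_measure mu -> nonzero_measure mu ->
      0 < delta -> doubling mu delta ->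
      (forall a b, a < b -> mu (Icc a b) = EFin (u b - u a)) ->
      in_Lambda mu v ->
      Lambda_seminorm mu v N ->
      delta <= eps -> N <= eps ->
      s_qs_graph s (graph_image u v)).
Proof.
  split.
  - intros mu d u v Hrad Hnz Hd0 Hdb Hr [Hcv [M [HM Hz]]].
    pose proof (INC_of mu d u Hrad Hnz Hd0 Hdb Hr) as Hu.
    pose proof (DBL_of mu d u Hdb Hr) as Hd.
    pose proof (ZYG_of mu u v M Hz Hr) as Hzv.
    pose proof (cont_u u d Hu Hd Hd0) as Hcu.
    split; [apply homeo_graph; auto; apply (unb_u u d); auto|].
    destruct (eta1_exists (Srel u v) (fun R0 r H => S0 u v R0 r Hu H)
                (S1 u v d M Hu Hd Hd0 Hzv Hcv ltac:(lra)) (S2 u v d M Hu Hd Hd0 Hzv Hcv ltac:(lra))) as [eta [He1 He2]].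
    exists eta. split; auto. apply qs_of; auto.
  - intros s Hs. destruct (S3 s Hs) as [eps [Heps H3]]. exists eps. split; auto.
    intros mu d u v N Hrad Hnz Hd0 Hdb Hr [Hcv _] [HN1 HN2] Hde HNe.
    assert (HM : exists M, (0 < M /\ zygmund_bound mu v M) /\ M < N + eps).
    { apply NNPP. intros Hn. assert (N + eps <= N); [|lra].
      apply HN2. intros x Hx. apply Rnot_lt_le. intros Hlt. apply Hn. exists x; auto. }
    destruct HM as [M [[HM0 Hz] HMl]].
    assert (HN0 : 0 <= N) by (apply HN2; intros x [Hx _]; lra).
    pose proof (INC_of mu d u Hrad Hnz Hd0 Hdb Hr) as Hu.
    pose proof (DBL_of mu d u Hdb Hr) as Hd.
    pose proof (ZYG_of mu u v M Hz Hr) as Hzv.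
    pose proof (cont_u u d Hu Hd Hd0) as Hcu.
    split; [apply homeo_graph; auto; apply (unb_u u d); auto|].
    destruct (eta2_exists (Srel u v) s Hs (fun R0 r H => S0 u v R0 r Hu H)
                (S1 u v d M Hu Hd Hd0 Hzv Hcv ltac:(lra)) (S2 u v d M Hu Hd Hd0 Hzv Hcv ltac:(lra))
                (H3 u v d M Hu Hd Hd0 Hzv Hcu Hcv ltac:(lra) Hde ltac:(lra))) as [eta [He1 [He2 He3]]].
    exists eta. split; auto. split; auto. apply qs_of; auto.
Qed.
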